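(* Let $G\subset\mathbb{R}^2$ be an open set with $0\in G$, let $c>0$, and let $F:G\to\mathbb{R}^2$ be a locally DC mapping such that $F(0)=0$ and $F'_+(0,(1,0))=(c,0)$. Let $S\subset G$ be an (s)-set. Then there exist $a>0$ and $b>0$ such that $$S^*\coloneqq F\big(S\cap((-\infty,a]\times\mathbb{R})\big)\cap((-\infty,b]\times\mathbb{R})$$ is an (s)-set.
   Context: A function on an open convex set is DC if it is the difference of two convex functions; a mapping is DC if all its components are DC; a mapping on an open set $G$ is locally DC if each point of $G$ has a convex open neighbourhood on which it is DC. $F'_+(x,v)=\lim_{t\to0+}(F(x+tv)-F(x))/t$ is the one-sided directional derivative. A function defined on a nonempty set $D\subset\mathbb{R}$ is DCR if it is the restriction of a DC function defined on $\mathbb{R}$. A nonempty closed set $S\subset\mathbb{R}^2$ is an (s)-set if there exists $r>0$ such that (a) $S\subset\bigcup_{i=1}^k\operatorname{graph} f_i$ for some DCR functions $f_i:[0,r]\to\mathbb{R}$ with $f_i(0)=(f_i)'_+(0)=0$, and (b) $S=\bigcup_{h\in H}\operatorname{graph} h$ for some family $H$ of continuous functions on $[0,r]$. *)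

(* Defs.v *)
From Stdlib Require Import Reals.
From Coquelicot Require Import Coquelicot.
Open Scope R_scope.

Definition pt2 := (R * R)%type.

Definition comb2 (l : R) (p q : pt2) : pt2 :=
  (l * fst p + (1 - l) * fst q, l * snd p + (1 - l) * snd q).

Definition convex_set2 (C : pt2 -> Prop) : Prop :=
  forall p q l, C p -> C q -> 0 <= l <= 1 -> C (comb2 l p q).

Definition convex_on2 (C : pt2 -> Prop) (f : pt2 -> R) : Prop :=
  forall p q l, C p -> C q -> 0 <= l <= 1 ->
    f (comb2 l p q) <= l * f p + (1 - l) * f q.

Definition DC_on2 (C : pt2 -> Prop) (f : pt2 -> R) : Prop :=
  exists g h : pt2 -> R, convex_on2 C g /\ convex_on2 C h /\
    forall p, C p -> f p = g p - h p.

Definition locally_DC (G : pt2 -> Prop) (F : pt2 -> pt2) : Prop :=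
  forall x, G x -> exists U : pt2 -> Prop,
    open U /\ convex_set2 U /\ U x /\ (forall p, U p -> G p) /\
    DC_on2 U (fun p => fst (F p)) /\ DC_on2 U (fun p => snd (F p)).

Definition dir_deriv2 (F : pt2 -> pt2) (x v w : pt2) : Prop :=
  filterlim (fun t => (fst (F (fst x + t * fst v, snd x + t * snd v)) - fst (F x)) / t)
            (at_right 0) (locally (fst w)) /\
  filterlim (fun t => (snd (F (fst x + t * fst v, snd x + t * snd v)) - snd (F x)) / t)
            (at_right 0) (locally (snd w)).

Definition convex_R (f : R -> R) : Prop :=
  forall x y l, 0 <= l <= 1 -> f (l * x + (1 - l) * y) <= l * f x + (1 - l) * f y.

Definition DC_R (f : R -> R) : Prop :=
  exists g h : R -> R, convex_R g /\ convex_R h /\ forall x, f x = g x - h x.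

Definition DCR_on (r : R) (f : R -> R) : Prop :=
  exists g : R -> R, DC_R g /\ forall x, 0 <= x <= r -> f x = g x.

Definition graph_on (r : R) (h : R -> R) (p : pt2) : Prop :=
  0 <= fst p <= r /\ snd p = h (fst p).

Definition continuous_on_I (r : R) (h : R -> R) : Prop :=
  forall x, 0 <= x <= r ->
    filterlim h (within (fun y => 0 <= y <= r) (locally x)) (locally (h x)).

Definition s_set (S : pt2 -> Prop) : Prop :=
  (exists p, S p) /\ closed S /\
  exists r, 0 < r /\
    (exists (k : nat) (f : nat -> R -> R),
        (forall i, (i < k)%nat ->
           DCR_on r (f i) /\ f i 0 = 0 /\
           filterlim (fun t => (f i t - f i 0) / t) (at_right 0) (locally 0)) /\
        (forall p, S p -> exists i, (i < k)%nat /\ graph_on r (f i) p)) /\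
    (exists H : (R -> R) -> Prop,
        (forall h, H h -> continuous_on_I r h) /\
        (forall p, S p <-> exists h, H h /\ graph_on r h p)).

(* Main.v *)
Require Import Defs.
From Stdlib Require Import Reals Lra Lia Psatz Classical ClassicalEpsilon.
From Coquelicot Require Import Coquelicot.
Open Scope R_scope.


Definition convI (a b : R) (f : R -> R) := forall x y l, a <= x <= b -> a <= y <= b -> 0 <= l <= 1 ->
  f (l*x+(1-l)*y) <= l*f x + (1-l)*f y.
Definition slopeI (a b : R) (f : R -> R) := forall x y z, a <= x -> x < y -> y < z -> z <= b ->
  (f y - f x) * (z - y) <= (f z - f y) * (y - x).
Definition lipI (a b : R) (f : R -> R) (L : R) := forall x y, a <= x <= b -> a <= y <= b ->
  Rabs (f x - f y) <= L * Rabs (x - y).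
Definition sl (f : R -> R) (x y : R) := (f y - f x) / (y - x).

Lemma div_le_mult (A B d1 d2 : R) : 0 < d1 -> 0 < d2 -> A * d2 <= B * d1 -> A / d1 <= B / d2.
Proof.
  intros h1 h2 h. apply Rmult_le_reg_r with (d1 * d2). nra.
  replace (A / d1 * (d1 * d2)) with (A * d2) by (field; lra).
  replace (B / d2 * (d1 * d2)) with (B * d1) by (field; lra). exact h.
Qed.

Lemma mult_le_div (A B d1 d2 : R) : 0 < d1 -> 0 < d2 -> A / d1 <= B / d2 -> A * d2 <= B * d1.
Proof.
  intros h1 h2 h. 
  replace (A * d2) with ((A / d1) * (d1 * d2)) by (field; lra).
  replace (B * d1) with ((B / d2) * (d1 * d2)) by (field; lra).
  apply Rmult_le_compat_r. nra. exact h.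
Qed.

Lemma convI_slope a b f : convI a b f -> slopeI a b f.
Proof.
  intros H x y z hx hxy hyz hz.
  set (l := (z - y) / (z - x)).
  assert (hl : l * (z - x) = z - y) by (unfold l; field; lra).
  assert (hl0 : 0 <= l <= 1).
  { split.
    - unfold l; apply Rmult_le_pos; [lra| left; apply Rinv_0_lt_compat; lra].
    - apply Rmult_le_reg_r with (z - x); [lra|]. rewrite hl. lra. }
  assert (hy : y = l * x + (1 - l) * z) by nra.
  specialize (H x z l ltac:(lra) ltac:(lra) hl0). rewrite <- hy in H.
  assert (H2 : f y * (z - x) <= (l * f x + (1 - l) * f z) * (z - x)).
  { apply Rmult_le_compat_r; lra. }
  assert (E : (l * f x + (1 - l) * f z) * (z - x) = f x * (z - y) + f z * (y - x)).
  { assert (hl2 : (1 - l) * (z - x) = y - x) by lra.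
    transitivity (f x * (l * (z - x)) + f z * ((1 - l) * (z - x))). ring.
    rewrite hl2. rewrite hl. ring. }
  rewrite E in H2. nra.
Qed.

Lemma slope_convI a b f : slopeI a b f -> convI a b f.
Proof.
  intros H x y l hx hy hl.
  destruct (Req_dec l 0) as [->|hl0].
  { replace (0 * x + (1 - 0) * y) with y by ring. lra. }
  destruct (Req_dec l 1) as [->|hl1].
  { replace (1 * x + (1 - 1) * y) with x by ring. lra. }
  set (m := l * x + (1 - l) * y).
  destruct (Rtotal_order x y) as [hxy|[hxy|hxy]].
  - assert (hm1 : x < m) by (unfold m; nra).
    assert (hm2 : m < y) by (unfold m; nra).
    specialize (H x m y ltac:(lra) hm1 hm2 ltac:(lra)).
    replace (y - m) with (l * (y - x)) in H by (unfold m; ring).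
    replace (m - x) with ((1 - l) * (y - x)) in H by (unfold m; ring).
    assert (((f m - f x) * l - (f y - f m) * (1 - l)) * (y - x) <= 0) by nra.
    assert ((f m - f x) * l - (f y - f m) * (1 - l) <= 0).
    { destruct (Rle_dec ((f m - f x) * l - (f y - f m) * (1 - l)) 0); auto.
      exfalso. assert (0 < ((f m - f x) * l - (f y - f m) * (1 - l)) * (y - x)).
      apply Rmult_lt_0_compat; lra. lra. }
    lra.
  - subst y. unfold m. replace (l * x + (1 - l) * x) with x by ring. lra.
  - assert (hm1 : y < m) by (unfold m; nra).
    assert (hm2 : m < x) by (unfold m; nra).
    specialize (H y m x ltac:(lra) hm1 hm2 ltac:(lra)).
    replace (x - m) with ((1 - l) * (x - y)) in H by (unfold m; ring).
    replace (m - y) with (l * (x - y)) in H by (unfold m; ring).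
    assert (((f m - f y) * (1 - l) - (f x - f m) * l) * (x - y) <= 0) by nra.
    assert ((f m - f y) * (1 - l) - (f x - f m) * l <= 0).
    { destruct (Rle_dec ((f m - f y) * (1 - l) - (f x - f m) * l) 0); auto.
      exfalso. assert (0 < ((f m - f y) * (1 - l) - (f x - f m) * l) * (x - y)).
      apply Rmult_lt_0_compat; lra. lra. }
    lra.
Qed.

Lemma sl_3 a b f x y z : slopeI a b f -> a <= x -> x < y -> y < z -> z <= b ->
  sl f x y <= sl f y z.
Proof. intros H hx h1 h2 hz. unfold sl. apply div_le_mult; try lra. apply H; lra. Qed.

Lemma sl_3l a b f x y z : slopeI a b f -> a <= x -> x < y -> y < z -> z <= b ->
  sl f x y <= sl f x z.
Proof. intros H hx h1 h2 hz. unfold sl. apply div_le_mult; try lra.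
  specialize (H x y z hx h1 h2 hz). nra. Qed.

Lemma sl_3r a b f x y z : slopeI a b f -> a <= x -> x < y -> y < z -> z <= b ->
  sl f x z <= sl f y z.
Proof. intros H hx h1 h2 hz. unfold sl. apply div_le_mult; try lra.
  specialize (H x y z hx h1 h2 hz). nra. Qed.

Lemma sl_sym f x y : sl f x y = sl f y x.
Proof.
  unfold sl. destruct (Req_dec x y) as [->|h]. reflexivity.
  field. lra.
Qed.

Lemma sl_mono a b f x y x' y' : slopeI a b f -> a <= x -> x < y -> x <= x' -> y <= y' -> x' < y' -> y' <= b ->
  sl f x y <= sl f x' y'.
Proof.
  intros H hx h1 h2 h3 h4 h5.
  apply Rle_trans with (sl f x y').
  - destruct (Req_dec y y') as [->|h]. lra. eapply sl_3l; eauto; lra.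
  - destruct (Req_dec x x') as [->|h]. lra.
    rewrite (sl_sym f x y'), (sl_sym f x' y').
    assert (sl f x y' <= sl f x' y') by (eapply sl_3r; eauto; lra).
    rewrite (sl_sym f x y'), (sl_sym f x' y') in H0. lra.
Qed.

Lemma sl_mul f x y : x <> y -> f y - f x = sl f x y * (y - x).
Proof. intros h. unfold sl. field. lra. Qed.

Lemma lip_of_slopes a b f L : (forall x y, a <= x -> x < y -> y <= b -> Rabs (sl f x y) <= L) -> lipI a b f L.
Proof.
  intros H x y hx hy.
  destruct (Rtotal_order x y) as [h|[h|h]].
  - rewrite <- Rabs_Ropp. replace (- (f x - f y)) with (f y - f x) by ring.
    rewrite (sl_mul f x y) by lra. rewrite Rabs_mult.
    rewrite (Rabs_left (x - y)) by lra. rewrite (Rabs_right (y - x)) by lra.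
    replace (- (x - y)) with (y - x) by ring.
    apply Rmult_le_compat_r; [lra|]. apply H; lra.
  - subst. replace (f y - f y) with 0 by ring. replace (y - y) with 0 by ring.
    rewrite Rabs_R0. lra.
  - rewrite (sl_mul f y x) by lra. rewrite Rabs_mult.
    rewrite (Rabs_right (x - y)) by lra.
    apply Rmult_le_compat_r; [lra|]. apply H; lra.
Qed.

Lemma lip_nonneg a b f L : a <= b -> lipI a b f L -> 0 <= L \/ True.
Proof. auto. Qed.

Lemma convex_R_convI f a b : convex_R f -> convI a b f.
Proof. intros H x y l _ _ hl. apply H; auto. Qed.


Ltac rabs_t := repeat (match goal with |- context [Rabs ?t] => let H := fresh in
  destruct (Rle_lt_dec 0 t) as [H|H]; [rewrite (Rabs_pos_eq t H)| rewrite (Rabs_left t H)] end).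
Ltac rabsH_t H := repeat (match type of H with context [Rabs ?t] => let H' := fresh in
  destruct (Rle_lt_dec 0 t) as [H'|H']; [rewrite (Rabs_pos_eq t H') in H| rewrite (Rabs_left t H') in H] end).

Lemma sl_bound_lip a b f L x y : lipI a b f L -> a <= x -> x < y -> y <= b -> Rabs (sl f x y) <= L.
Proof.
  intros H hx hxy hy. specialize (H y x ltac:(lra) ltac:(lra)).
  unfold sl. rewrite Rabs_div by lra. rewrite (Rabs_right (y - x)) in * by lra.
  apply Rmult_le_reg_r with (y - x). lra.
  replace (Rabs (f y - f x) / (y - x) * (y - x)) with (Rabs (f y - f x)) by (field; lra). lra.
Qed.

Lemma convex_R_slope f a b : convex_R f -> slopeI a b f.
Proof. intros H. apply convI_slope. apply convex_R_convI. exact H. Qed.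

Lemma convex_R_lip f a b : convex_R f -> a <= b -> exists L, 0 <= L /\ lipI a b f L.
Proof.
  intros H hab.
  pose proof (convex_R_slope f (a - 1) (b + 1) H) as HS.
  exists (Rabs (sl f (a - 1) a) + Rabs (sl f b (b + 1))). split.
  { pose proof (Rabs_pos (sl f (a - 1) a)); pose proof (Rabs_pos (sl f b (b+1))); lra. }
  apply lip_of_slopes. intros x y hx hxy hy.
  assert (h1 : sl f (a - 1) a <= sl f x y) by (eapply sl_mono; eauto; lra).
  assert (h2 : sl f x y <= sl f b (b + 1)) by (eapply sl_mono; eauto; lra).
  rabs_t; rabsH_t h1; rabsH_t h2; lra.
Qed.

Lemma lip_of_bound A B d M f : slopeI A B f -> 0 < d -> 0 <= M ->
  (forall x, A <= x <= B -> Rabs (f x) <= M) -> lipI (A + d) (B - d) f (2 * M / d).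
Proof.
  intros HS hd hM HB. apply lip_of_slopes. intros x y hx hxy hy.
  assert (hu : sl f x y <= sl f y B) by (eapply sl_3; eauto; lra).
  assert (hl : sl f A x <= sl f x y) by (eapply sl_3; eauto; lra).
  assert (e1 : sl f y B <= 2 * M / d).
  { unfold sl. apply div_le_mult; try lra.
    pose proof (HB B ltac:(lra)); pose proof (HB y ltac:(lra)). rabsH_t H; rabsH_t H0; nra. }
  assert (e2 : - (2 * M / d) <= sl f A x).
  { unfold sl. replace (- (2 * M / d)) with ((- (2 * M)) / d) by (field; lra).
    apply div_le_mult; try lra.
    pose proof (HB A ltac:(lra)); pose proof (HB x ltac:(lra)). rabsH_t H; rabsH_t H0; nra. }
  rabs_t; lra.
Qed.

Definition clamp (a b x : R) := Rmax a (Rmin x b).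

Lemma clamp_in a b x : a <= b -> a <= clamp a b x <= b.
Proof. intros h. unfold clamp, Rmax, Rmin. repeat destruct Rle_dec; lra. Qed.

Lemma clamp_id a b x : a <= x <= b -> clamp a b x = x.
Proof. intros h. unfold clamp, Rmax, Rmin. repeat destruct Rle_dec; lra. Qed.

Lemma clamp_dist a b x y : a <= y <= b -> Rabs (clamp a b x - y) + Rabs (x - clamp a b x) = Rabs (x - y).
Proof. intros h. unfold clamp, Rmax, Rmin. repeat destruct Rle_dec; rabs_t; lra. Qed.

Lemma clamp_lip a b x y : a <= b -> Rabs (clamp a b x - clamp a b y) <= Rabs (x - y).
Proof. intros h. unfold clamp, Rmax, Rmin. repeat destruct Rle_dec; rabs_t; lra. Qed.

Lemma extend_convex a b P L : a <= b -> 0 <= L -> convI a b P -> lipI a b P L ->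
  exists Ph, convex_R Ph /\ forall x, a <= x <= b -> Ph x = P x.
Proof.
  intros hab hL HC HL.
  set (Ph := fun x => P (clamp a b x) + L * Rabs (x - clamp a b x)).
  assert (key : forall z y, a <= y <= b -> Ph z <= P y + L * Rabs (z - y)).
  { intros z y hy. unfold Ph. pose proof (clamp_in a b z hab).
    pose proof (HL (clamp a b z) y H hy).
    pose proof (clamp_dist a b z y hy).
    assert (P (clamp a b z) - P y <= L * Rabs (clamp a b z - y)).
    { eapply Rle_trans; [apply Rle_abs| exact H0]. }
    nra. }
  exists Ph. split.
  - intros x y l hl.
    set (cx := clamp a b x). set (cy := clamp a b y).
    pose proof (clamp_in a b x hab). pose proof (clamp_in a b y hab).
    fold cx in H; fold cy in H0.
    assert (hm : a <= l * cx + (1 - l) * cy <= b) by nra.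
    pose proof (key (l * x + (1 - l) * y) _ hm) as K.
    pose proof (HC cx cy l H H0 hl) as C.
    assert (T : Rabs (l * x + (1 - l) * y - (l * cx + (1 - l) * cy)) <= l * Rabs (x - cx) + (1 - l) * Rabs (y - cy)).
    { replace (l * x + (1 - l) * y - (l * cx + (1 - l) * cy)) with (l * (x - cx) + (1 - l) * (y - cy)) by ring.
      eapply Rle_trans; [apply Rabs_triang|]. rewrite !Rabs_mult.
      rewrite (Rabs_pos_eq l) by lra. rewrite (Rabs_pos_eq (1 - l)) by lra. lra. }
    unfold Ph at 2 3. fold cx cy. nra.
  - intros x hx. unfold Ph. rewrite clamp_id by auto. replace (x - x) with 0 by ring.
    rewrite Rabs_R0. ring.
Qed.

Definition DCI (a b : R) (f : R -> R) := exists P Q L, 0 <= L /\ convI a b P /\ convI a b Q /\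
  lipI a b P L /\ lipI a b Q L /\ forall x, a <= x <= b -> f x = P x - Q x.

Lemma DCI_DCR r f : 0 <= r -> DCI 0 r f -> DCR_on r f.
Proof.
  intros hr (P & Q & L & hL & HP & HQ & LP & LQ & E).
  destruct (extend_convex 0 r P L hr hL HP LP) as (P' & CP & EP).
  destruct (extend_convex 0 r Q L hr hL HQ LQ) as (Q' & CQ & EQ).
  exists (fun x => P' x - Q' x). split.
  - exists P', Q'. split; auto.
  - intros x hx. rewrite E, EP, EQ by auto. reflexivity.
Qed.

Lemma inf_slopes A f L : 0 < A -> slopeI 0 A f -> lipI 0 A f L ->
  forall eps, 0 < eps -> exists a kap, 0 < a /\ 2 * a <= A /\
    forall s t, 0 <= s -> s < t -> t <= a -> kap <= sl f s t <= kap + eps.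
Proof.
  intros hA HS HL eps he.
  set (E := fun v => exists u, 0 < u <= A /\ v = - sl f 0 u).
  assert (hb : bound E).
  { exists L. intros v (u & hu & ->). pose proof (sl_bound_lip 0 A f L 0 u HL ltac:(lra) ltac:(lra) ltac:(lra)).
    rabsH_t H; lra. }
  assert (hne : exists v, E v) by (exists (- sl f 0 A); exists A; split; [lra|auto]).
  destruct (completeness E hb hne) as [m [hub hlub]].
  assert (low : forall u, 0 < u <= A -> - m <= sl f 0 u).
  { intros u hu. assert (E (- sl f 0 u)) by (exists u; auto). apply hub in H. lra. }
  assert (ex : exists u0, 0 < u0 <= A /\ sl f 0 u0 <= - m + eps / 2).
  { apply NNPP. intros Hn.
    assert (is_upper_bound E (m - eps / 2)).
    { intros v (u & hu & ->). destruct (Rle_dec (sl f 0 u) (- m + eps / 2)).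
      - exfalso; apply Hn; exists u; auto.
      - lra. }
    apply hlub in H. lra. }
  destruct ex as (u0 & hu0 & hs0).
  exists (u0 / 2), (- m). split; [lra|split;[lra|]].
  intros s t hs hst ht. split.
  - eapply Rle_trans; [apply (low t); lra|]. eapply sl_mono; eauto; lra.
  - assert (sl f s t <= sl f (u0/2) u0) by (eapply sl_mono; eauto; lra).
    assert (E2 : sl f (u0/2) u0 = 2 * sl f 0 u0 - sl f 0 (u0/2)) by (unfold sl; field; lra).
    pose proof (low (u0/2) ltac:(lra)). lra.
Qed.


Definition sqr (d : R) (p : pt2) := -d <= fst p <= d /\ -d <= snd p <= d.

Definition lip2 (D : pt2 -> Prop) (g : pt2 -> R) (L : R) := forall p q, D p -> D q ->
  Rabs (g p - g q) <= L * (Rabs (fst p - fst q) + Rabs (snd p - snd q)).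

Lemma open_sqr (U : pt2 -> Prop) : open U -> U (0,0) -> exists d, 0 < d /\ forall p, sqr d p -> U p.
Proof.
  intros HU h0. destruct (HU _ h0) as [eps Heps].
  exists (eps / 2). split. destruct eps; simpl; lra.
  intros [x y] [h1 h2]. simpl in *. apply Heps. split.
  - change (Rabs (x - 0) < eps). rewrite Rminus_0_r. apply Rabs_def1; destruct eps; simpl in *; lra.
  - change (Rabs (y - 0) < eps). rewrite Rminus_0_r. apply Rabs_def1; destruct eps; simpl in *; lra.
Qed.

Lemma max_comb a b l : 0 <= l <= 1 -> l * a + (1 - l) * b <= Rmax a b.
Proof. intros. unfold Rmax; destruct Rle_dec; nra. Qed.

Lemma conv_sec_x U g y x1 x2 l : convex_on2 U g -> U (x1, y) -> U (x2, y) -> 0 <= l <= 1 ->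
  g (l * x1 + (1 - l) * x2, y) <= l * g (x1, y) + (1 - l) * g (x2, y).
Proof.
  intros HC h1 h2 hl. pose proof (HC _ _ l h1 h2 hl). unfold comb2 in H; simpl in H.
  replace (l * y + (1 - l) * y) with y in H by ring. exact H.
Qed.

Lemma conv_sec_y U g x y1 y2 l : convex_on2 U g -> U (x, y1) -> U (x, y2) -> 0 <= l <= 1 ->
  g (x, l * y1 + (1 - l) * y2) <= l * g (x, y1) + (1 - l) * g (x, y2).
Proof.
  intros HC h1 h2 hl. pose proof (HC _ _ l h1 h2 hl). unfold comb2 in H; simpl in H.
  replace (l * x + (1 - l) * x) with x in H by ring. exact H.
Qed.

Lemma interval_comb d v : 0 < d -> -d <= v <= d -> exists l, 0 <= l <= 1 /\ v = l * (- d) + (1 - l) * d.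
Proof.
  intros hd hv. exists ((d - v) / (2 * d)). split.
  - split. apply Rmult_le_pos; [lra|left; apply Rinv_0_lt_compat; lra].
    apply Rmult_le_reg_r with (2 * d); [lra|]. field_simplify; lra.
  - field. lra.
Qed.

Lemma convex2_lip U g d : convex_on2 U g -> 0 < d -> (forall p, sqr d p -> U p) ->
  exists L, 0 <= L /\ lip2 (sqr (d / 2)) g L.
Proof.
  intros HC hd HS.
  set (Mu := Rmax (Rmax (g (-d, -d)) (g (-d, d))) (Rmax (g (d, -d)) (g (d, d)))).
  assert (up : forall x y, -d <= x <= d -> -d <= y <= d -> g (x, y) <= Mu).
  { intros x y hx hy.
    destruct (interval_comb d x hd hx) as (l & hl & ->).
    destruct (interval_comb d y hd hy) as (l' & hl' & ->).
    assert (S1 : forall xx, -d <= xx <= d -> g (xx, l' * (-d) + (1 - l') * d) <= Rmax (g (xx, -d)) (g (xx, d))).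
    { intros xx hxx. eapply Rle_trans. apply conv_sec_y with U; auto; apply HS; split; simpl; lra.
      apply max_comb; auto. }
    eapply Rle_trans. apply conv_sec_x with U; auto; apply HS; split; simpl; nra.
    eapply Rle_trans. apply max_comb; auto.
    unfold Mu. pose proof (S1 (-d) ltac:(lra)). pose proof (S1 d ltac:(lra)).
    unfold Rmax in *; repeat destruct Rle_dec; lra. }
  set (g0 := g (0, 0)).
  assert (lowb : forall x y, -d <= x <= d -> -d <= y <= d -> 2 * g0 - Mu <= g (x, y)).
  { intros x y hx hy. pose proof (HC (x, y) (-x, -y) (1/2) ltac:(apply HS; split; simpl; lra)
       ltac:(apply HS; split; simpl; lra) ltac:(lra)).
    unfold comb2 in H; simpl in H.
    replace (1 / 2 * x + (1 - 1 / 2) * - x) with 0 in H by field.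
    replace (1 / 2 * y + (1 - 1 / 2) * - y) with 0 in H by field. fold g0 in H.
    pose proof (up (-x) (-y) ltac:(lra) ltac:(lra)). lra. }
  set (Mb := 2 * Rabs Mu + 2 * Rabs g0).
  assert (hMb : 0 <= Mb) by (unfold Mb; pose proof (Rabs_pos Mu); pose proof (Rabs_pos g0); lra).
  assert (bnd : forall x y, -d <= x <= d -> -d <= y <= d -> Rabs (g (x, y)) <= Mb).
  { intros x y hx hy. pose proof (up x y hx hy). pose proof (lowb x y hx hy).
    unfold Mb. rabs_t; rabs_t; pose proof (Rabs_pos Mu); pose proof (Rabs_pos g0);
    pose proof (Rle_abs Mu); pose proof (Rle_abs g0);
    pose proof (Rle_abs (-Mu)); pose proof (Rle_abs (-g0)); rewrite Rabs_Ropp in *; lra. }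
  exists (2 * Mb / (d / 2)). split. { apply Rmult_le_pos. lra. left; apply Rinv_0_lt_compat; lra. }
  assert (LX : forall y, -d <= y <= d -> lipI (-d + d/2) (d - d/2) (fun x => g (x, y)) (2 * Mb / (d / 2))).
  { intros y hy. apply lip_of_bound; try lra.
    - apply convI_slope. intros x1 x2 l h1 h2 hl. apply conv_sec_x with U; auto; apply HS; split; simpl; lra.
    - intros x hx. apply bnd; lra. }
  assert (LY : forall x, -d <= x <= d -> lipI (-d + d/2) (d - d/2) (fun y => g (x, y)) (2 * Mb / (d / 2))).
  { intros x hx. apply lip_of_bound; try lra.
    - apply convI_slope. intros y1 y2 l h1 h2 hl. apply conv_sec_y with U; auto; apply HS; split; simpl; lra.
    - intros y hy. apply bnd; lra. }
  intros [x1 y1] [x2 y2] [hx1 hy1] [hx2 hy2]; simpl in *.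
  pose proof (LX y1 ltac:(lra) x1 x2 ltac:(lra) ltac:(lra)).
  pose proof (LY x2 ltac:(lra) y1 y2 ltac:(lra) ltac:(lra)). simpl in *.
  replace (g (x1, y1) - g (x2, y2)) with ((g (x1, y1) - g (x2, y1)) + (g (x2, y1) - g (x2, y2))) by ring.
  eapply Rle_trans. apply Rabs_triang. lra.
Qed.


Lemma comb_in a b x y l : a <= x <= b -> a <= y <= b -> 0 <= l <= 1 -> a <= l * x + (1 - l) * y <= b.
Proof. intros. nra. Qed.

Lemma comp_conv (D : pt2 -> Prop) g Lg a b a1 b1 a2 b2 :
  convex_set2 D -> convex_on2 D g -> lip2 D g Lg -> 0 <= Lg ->
  convI a b a1 -> convI a b b1 -> convI a b a2 -> convI a b b2 ->
  (forall t, a <= t <= b -> D (a1 t - b1 t, a2 t - b2 t)) ->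
  convI a b (fun t => g (a1 t - b1 t, a2 t - b2 t) + Lg * (a1 t + b1 t + a2 t + b2 t)).
Proof.
  intros HD HC HL hLg C1 C2 C3 C4 HU x y l hx hy hl.
  pose proof (comb_in a b x y l hx hy hl) as hw.
  set (w := l * x + (1 - l) * y) in *.
  set (ux := (a1 x - b1 x, a2 x - b2 x)). set (uy := (a1 y - b1 y, a2 y - b2 y)).
  set (uw := (a1 w - b1 w, a2 w - b2 w)).
  assert (Dx : D ux) by (apply HU; auto). assert (Dy : D uy) by (apply HU; auto).
  assert (Dw : D uw) by (apply HU; auto).
  assert (Dm : D (comb2 l ux uy)) by (apply HD; auto).
  pose proof (HL uw (comb2 l ux uy) Dw Dm) as L1.
  pose proof (HC ux uy l Dx Dy hl) as G1.
  pose proof (C1 x y l hx hy hl) as c1. pose proof (C2 x y l hx hy hl) as c2.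
  pose proof (C3 x y l hx hy hl) as c3. pose proof (C4 x y l hx hy hl) as c4.
  fold w in c1, c2, c3, c4.
  unfold comb2, uw, ux, uy in L1; simpl in L1.
  assert (R1 : Rabs (a1 w - b1 w - (l * (a1 x - b1 x) + (1 - l) * (a1 y - b1 y))) <=
     (l * a1 x + (1 - l) * a1 y - a1 w) + (l * b1 x + (1 - l) * b1 y - b1 w)).
  { rabs_t; lra. }
  assert (R2 : Rabs (a2 w - b2 w - (l * (a2 x - b2 x) + (1 - l) * (a2 y - b2 y))) <=
     (l * a2 x + (1 - l) * a2 y - a2 w) + (l * b2 x + (1 - l) * b2 y - b2 w)).
  { rabs_t; lra. }
  assert (M : Lg * (Rabs (a1 w - b1 w - (l * (a1 x - b1 x) + (1 - l) * (a1 y - b1 y))) +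
     Rabs (a2 w - b2 w - (l * (a2 x - b2 x) + (1 - l) * (a2 y - b2 y)))) <=
     Lg * ((l * a1 x + (1 - l) * a1 y - a1 w) + (l * b1 x + (1 - l) * b1 y - b1 w) +
           ((l * a2 x + (1 - l) * a2 y - a2 w) + (l * b2 x + (1 - l) * b2 y - b2 w)))).
  { apply Rmult_le_compat_l; lra. }
  pose proof (Rle_abs (g uw - g (comb2 l ux uy))).
  unfold comb2, uw, ux, uy in H, G1; simpl in H, G1.
  unfold ux, uy, uw. lra.
Qed.

Lemma convI_add a b f g : convI a b f -> convI a b g -> convI a b (fun x => f x + g x).
Proof. intros H1 H2 x y l hx hy hl. pose proof (H1 x y l hx hy hl); pose proof (H2 x y l hx hy hl); lra. Qed.

Lemma convI_scal a b f c : 0 <= c -> convI a b f -> convI a b (fun x => c * f x).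
Proof. intros hc H1 x y l hx hy hl. pose proof (H1 x y l hx hy hl).
  apply Rmult_le_compat_l with (r := c) in H; auto. lra. Qed.

Lemma lipI_add a b f g L1 L2 : lipI a b f L1 -> lipI a b g L2 -> lipI a b (fun x => f x + g x) (L1 + L2).
Proof. intros H1 H2 x y hx hy. pose proof (H1 x y hx hy); pose proof (H2 x y hx hy).
  replace (f x + g x - (f y + g y)) with ((f x - f y) + (g x - g y)) by ring.
  eapply Rle_trans. apply Rabs_triang. lra. Qed.

Lemma lipI_scal a b f c L : 0 <= c -> lipI a b f L -> lipI a b (fun x => c * f x) (c * L).
Proof. intros hc H1 x y hx hy. pose proof (H1 x y hx hy).
  replace (c * f x - c * f y) with (c * (f x - f y)) by ring. rewrite Rabs_mult, Rabs_pos_eq by lra.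
  rewrite Rmult_assoc. apply Rmult_le_compat_l; lra. Qed.

Lemma lipI_mono a b f L L' : L <= L' -> lipI a b f L -> lipI a b f L'.
Proof. intros h H x y hx hy. pose proof (H x y hx hy). pose proof (Rabs_pos (x - y)). nra. Qed.

Lemma lipI_ext a b f g L : (forall x, a <= x <= b -> f x = g x) -> lipI a b f L -> lipI a b g L.
Proof. intros E H x y hx hy. rewrite <- (E x hx), <- (E y hy). auto. Qed.

Lemma convI_restr a b a' b' f : a <= a' -> b' <= b -> convI a b f -> convI a' b' f.
Proof. intros h1 h2 H x y l hx hy hl. apply H; auto; lra. Qed.

Lemma lipI_restr a b a' b' f L : a <= a' -> b' <= b -> lipI a b f L -> lipI a' b' f L.
Proof. intros h1 h2 H x y hx hy. apply H; lra. Qed.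

Lemma DCI_restr a b a' b' f : a <= a' -> b' <= b -> DCI a b f -> DCI a' b' f.
Proof.
  intros h1 h2 (P & Q & L & hL & CP & CQ & LP & LQ & E).
  exists P, Q, L. repeat split; auto.
  - eapply convI_restr; eauto. - eapply convI_restr; eauto.
  - eapply lipI_restr; eauto. - eapply lipI_restr; eauto.
  - intros; apply E; lra.
Qed.

Lemma DCI_ext a b f g : (forall x, a <= x <= b -> f x = g x) -> DCI a b f -> DCI a b g.
Proof.
  intros E (P & Q & L & hL & CP & CQ & LP & LQ & E').
  exists P, Q, L. repeat split; auto. intros; rewrite <- E; auto.
Qed.

Lemma DCI_sub a b f g : DCI a b f -> DCI a b g -> DCI a b (fun x => f x - g x).
Proof.
  intros (P1 & Q1 & L1 & hL1 & CP1 & CQ1 & LP1 & LQ1 & E1) (P2 & Q2 & L2 & hL2 & CP2 & CQ2 & LP2 & LQ2 & E2).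
  exists (fun x => P1 x + Q2 x), (fun x => Q1 x + P2 x), (L1 + L2). repeat split.
  - lra. - apply convI_add; auto. - apply convI_add; auto.
  - apply lipI_add; auto. - apply lipI_add; auto.
  - intros x hx. rewrite E1, E2 by auto. ring.
Qed.

Lemma DCI_id a b : DCI a b (fun x => x).
Proof.
  exists (fun x => x), (fun _ => 0), 1. repeat split.
  - lra. - intros x y l _ _ _; lra. - intros x y l _ _ _; lra.
  - intros x y _ _. lra. - intros x y _ _. replace (0 - 0) with 0 by ring. rewrite Rabs_R0. pose proof (Rabs_pos (x - y)). lra.
  - intros; ring.
Qed.

Lemma DCI_zero a b : DCI a b (fun _ => 0).
Proof.
  exists (fun _ => 0), (fun _ => 0), 0. repeat split.
  - lra. - intros x y l _ _ _; lra. - intros x y l _ _ _; lra.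
  - intros x y _ _. replace (0 - 0) with 0 by ring. rewrite Rabs_R0. lra.
  - intros x y _ _. replace (0 - 0) with 0 by ring. rewrite Rabs_R0. lra.
  - intros; ring.
Qed.

Lemma DCI_convR a b f : a <= b -> convex_R f -> DCI a b f.
Proof.
  intros hab H. destruct (convex_R_lip f a b H hab) as (L & hL & HL).
  exists f, (fun _ => 0), L. repeat split; auto.
  - apply convex_R_convI; auto. - intros x y l _ _ _; lra.
  - intros x y _ _. replace (0 - 0) with 0 by ring. rewrite Rabs_R0. pose proof (Rabs_pos (x - y)). nra.
  - intros; ring.
Qed.

Lemma DCI_DCR_fun a b f : a <= b -> DC_R f -> DCI a b f.
Proof.
  intros hab (g & h & Cg & Ch & E).
  apply DCI_ext with (fun x => g x - h x). intros; auto.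
  apply DCI_sub; apply DCI_convR; auto.
Qed.

Lemma DCI_lip a b f : DCI a b f -> exists L, 0 <= L /\ lipI a b f L.
Proof.
  intros (P & Q & L & hL & CP & CQ & LP & LQ & E).
  exists (L + L). split. lra.
  apply lipI_ext with (fun x => P x + (-1) * Q x). intros; rewrite E; auto; ring.
  apply lipI_add; auto.
  intros x y hx hy. replace (-1 * Q x - -1 * Q y) with (- (Q x - Q y)) by ring. rewrite Rabs_Ropp. auto.
Qed.

Lemma abs_sub4 p q p' q' : Rabs (p - q - (p' - q')) <= Rabs (p - p') + Rabs (q - q').
Proof. rabs_t; lra. Qed.

Lemma DCI_comp (D : pt2 -> Prop) g Lg a b u1 u2 :
  convex_set2 D -> convex_on2 D g -> lip2 D g Lg -> 0 <= Lg ->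
  DCI a b u1 -> DCI a b u2 -> (forall t, a <= t <= b -> D (u1 t, u2 t)) ->
  DCI a b (fun t => g (u1 t, u2 t)).
Proof.
  intros HD HC HL hLg (P1 & Q1 & L1 & hL1 & CP1 & CQ1 & LP1 & LQ1 & E1)
    (P2 & Q2 & L2 & hL2 & CP2 & CQ2 & LP2 & LQ2 & E2) HU.
  assert (HU' : forall t, a <= t <= b -> D (P1 t - Q1 t, P2 t - Q2 t)).
  { intros t ht. rewrite <- E1, <- E2 by auto. auto. }
  pose proof (comp_conv D g Lg a b P1 Q1 P2 Q2 HD HC HL hLg CP1 CQ1 CP2 CQ2 HU') as CK.
  set (LL := Lg * (L1 + L1 + (L2 + L2))).
  assert (hLL : 0 <= LL) by (unfold LL; apply Rmult_le_pos; lra).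
  assert (LS : lipI a b (fun t => Lg * (P1 t + Q1 t + P2 t + Q2 t)) LL).
  { apply lipI_scal; auto. apply lipI_ext with (fun t => (P1 t + Q1 t) + (P2 t + Q2 t)). intros; ring.
    apply lipI_add; apply lipI_add; auto. }
  assert (LG : lipI a b (fun t => g (P1 t - Q1 t, P2 t - Q2 t)) LL).
  { intros x y hx hy. eapply Rle_trans. apply HL; auto. simpl.
    unfold LL. rewrite Rmult_assoc. apply Rmult_le_compat_l; auto.
    pose proof (LP1 x y hx hy); pose proof (LQ1 x y hx hy); pose proof (LP2 x y hx hy); pose proof (LQ2 x y hx hy).
    pose proof (abs_sub4 (P1 x) (Q1 x) (P1 y) (Q1 y)).
    pose proof (abs_sub4 (P2 x) (Q2 x) (P2 y) (Q2 y)). lra. }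
  exists (fun t => g (P1 t - Q1 t, P2 t - Q2 t) + Lg * (P1 t + Q1 t + P2 t + Q2 t)),
    (fun t => Lg * (P1 t + Q1 t + P2 t + Q2 t)), (LL + LL). repeat split.
  - lra. - exact CK.
  - apply convI_scal; auto. apply convI_add; [apply convI_add; [apply convI_add|]|]; auto.
  - apply lipI_add; auto. - eapply lipI_mono; [|exact LS]. lra.
  - intros t ht. rewrite E1, E2 by auto. ring.
Qed.


Lemma core_ineq al be m e0 C kap p1 p2 q1 q2 sg :
  0 < al -> 0 < be -> 0 < m -> e0 <= m / 2 -> C * m = 2 -> 0 < C ->
  m <= p1 - q1 -> p1 <= p2 -> q1 <= q2 ->
  0 <= p1 + q1 - kap <= e0 -> 0 <= p2 + q2 - kap <= e0 -> (sg = 1 \/ sg = -1) ->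
  (C * (p1 + q1 - kap) * al + sg * al) * ((p2 - q2) * be) <=
  (C * (p2 + q2 - kap) * be + sg * be) * ((p1 - q1) * al).
Proof.
  intros hal hbe hm he0 hC hC0 h1 h2 h3 he1 he2 hsg.
  set (D1 := p2 - p1). set (D2 := q2 - q1). set (e1 := p1 + q1 - kap).
  assert (E : (C * (p2 + q2 - kap) + sg) * (p1 - q1) - (C * e1 + sg) * (p2 - q2) =
              C * ((D1 + D2) * (p1 - q1) - e1 * (D1 - D2)) - sg * (D1 - D2)).
  { unfold D1, D2, e1. ring. }
  assert (B1 : e1 * (D1 - D2) <= e0 * (D1 + D2)).
  { unfold D1, D2 in *. fold e1 in he1. nra. }
  assert (B2 : (D1 + D2) * m <= (D1 + D2) * (p1 - q1)).
  { apply Rmult_le_compat_l; unfold D1, D2; lra. }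
  assert (B3 : C * ((D1 + D2) * (p1 - q1) - e1 * (D1 - D2)) >= C * ((D1 + D2) * (m - e0))).
  { apply Rmult_ge_compat_l. lra. nra. }
  assert (B4 : C * ((D1 + D2) * (m - e0)) >= (D1 + D2)).
  { assert (0 <= D1 + D2) by (unfold D1, D2; lra).
    assert (C * (m - e0) >= 1).
    { assert (C * e0 <= C * (m / 2)) by (apply Rmult_le_compat_l; lra).
      assert (C * (m / 2) = 1) by (replace (C * (m/2)) with (C * m / 2) by field; lra). nra. }
    nra. }
  assert (B5 : sg * (D1 - D2) <= D1 + D2).
  { unfold D1, D2. destruct hsg as [-> | ->]; lra. }
  assert (F : 0 <= (C * (p2 + q2 - kap) + sg) * (p1 - q1) - (C * e1 + sg) * (p2 - q2)) by lra.
  assert (0 <= ((C * (p2 + q2 - kap) + sg) * (p1 - q1) - (C * e1 + sg) * (p2 - q2)) * (al * be)).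
  { apply Rmult_le_pos; nra. }
  fold e1. nra.
Qed.

Lemma inverse_DC a b phi psi K1 K2 L m e0 kap :
  0 < a -> 0 < b -> 0 < m -> e0 <= m / 2 -> 0 <= L ->
  convI 0 a K1 -> convI 0 a K2 -> lipI 0 a K1 L -> lipI 0 a K2 L ->
  (forall t, 0 <= t <= a -> phi t = K1 t - K2 t) ->
  (forall s t, 0 <= s -> s < t -> t <= a -> m <= sl phi s t) ->
  (forall s t, 0 <= s -> s < t -> t <= a -> kap <= sl K1 s t + sl K2 s t <= kap + e0) ->
  (forall x, 0 <= x <= b -> 0 <= psi x <= a /\ phi (psi x) = x) ->
  DCI 0 b psi.
Proof.
  intros ha hb hm he0 hL C1 C2 L1 L2 E Hm HW Hpsi.
  assert (S1 := convI_slope _ _ _ C1). assert (S2 := convI_slope _ _ _ C2).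
  assert (phi_inc : forall s t, 0 <= s -> s < t -> t <= a -> m * (t - s) <= phi t - phi s).
  { intros s t hs hst ht. rewrite (sl_mul phi s t) by lra. apply Rmult_le_compat_r. lra. apply Hm; lra. }
  assert (psi_inc : forall x y, 0 <= x -> x < y -> y <= b -> psi x < psi y).
  { intros x y hx hxy hy. destruct (Hpsi x ltac:(lra)) as [hx1 hx2]. destruct (Hpsi y ltac:(lra)) as [hy1 hy2].
    destruct (Rlt_le_dec (psi x) (psi y)) as [h|h]; auto.
    destruct (Req_dec (psi x) (psi y)) as [e|e].
    - rewrite e in hx2. lra.
    - pose proof (phi_inc (psi y) (psi x) ltac:(lra) ltac:(lra) ltac:(lra)). nra. }
  assert (psi_lip : lipI 0 b psi (/ m)).
  { apply lip_of_slopes. intros x y hx hxy hy.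
    pose proof (psi_inc x y hx hxy hy).
    destruct (Hpsi x ltac:(lra)) as [hx1 hx2]. destruct (Hpsi y ltac:(lra)) as [hy1 hy2].
    pose proof (phi_inc (psi x) (psi y) ltac:(lra) H ltac:(lra)). rewrite hx2, hy2 in H0.
    unfold sl. rewrite Rabs_pos_eq.
    - apply Rmult_le_reg_r with (y - x). lra.
      replace ((psi y - psi x) / (y - x) * (y - x)) with (psi y - psi x) by (field; lra).
      apply Rmult_le_reg_l with m. lra. replace (m * (/ m * (y - x))) with (y - x) by (field; lra). lra.
    - apply Rmult_le_pos. lra. left. apply Rinv_0_lt_compat. lra. }
  set (C := 2 / m).
  assert (hC : C * m = 2) by (unfold C; field; lra).
  assert (hC0 : 0 < C) by (unfold C; apply Rmult_lt_0_compat; [lra|apply Rinv_0_lt_compat; lra]).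
  set (wt := fun x => C * (K1 (psi x) + K2 (psi x) - kap * psi x)).
  assert (key : forall sg, (sg = 1 \/ sg = -1) -> slopeI 0 b (fun x => wt x + sg * psi x)).
  { intros sg hsg x y z hx hxy hyz hz.
    pose proof (psi_inc x y hx hxy ltac:(lra)). pose proof (psi_inc y z ltac:(lra) hyz hz).
    destruct (Hpsi x ltac:(lra)) as [hx1 hx2]. destruct (Hpsi y ltac:(lra)) as [hy1 hy2].
    destruct (Hpsi z ltac:(lra)) as [hz1 hz2].
    set (s := psi x) in *. set (t := psi y) in *. set (v := psi z) in *.
    assert (ey : y - x = sl phi s t * (t - s)) by (rewrite <- hx2, <- hy2; apply sl_mul; lra).
    assert (ez : z - y = sl phi t v * (v - t)) by (rewrite <- hz2, <- hy2; apply sl_mul; lra).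
    assert (ep1 : sl phi s t = sl K1 s t - sl K2 s t) by (unfold sl; rewrite !E by lra; field; lra).
    assert (ep2 : sl phi t v = sl K1 t v - sl K2 t v) by (unfold sl; rewrite !E by lra; field; lra).
    assert (w1 : wt y + sg * t - (wt x + sg * s) = C * (sl K1 s t + sl K2 s t - kap) * (t - s) + sg * (t - s)).
    { unfold wt, sl. fold s t. field. lra. }
    assert (w2 : wt z + sg * v - (wt y + sg * t) = C * (sl K1 t v + sl K2 t v - kap) * (v - t) + sg * (v - t)).
    { unfold wt, sl. fold v t. field. lra. }
    simpl. fold s t v. rewrite w1, w2, ez, ey, ep1, ep2.
    pose proof (HW s t ltac:(lra) ltac:(lra) ltac:(lra)). pose proof (HW t v ltac:(lra) ltac:(lra) ltac:(lra)).
    apply core_ineq with m e0; try lra.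
    - rewrite <- ep1. apply Hm; lra.
    - eapply sl_3; eauto; lra.
    - eapply sl_3; eauto; lra. }
  assert (LW : lipI 0 b wt (C * ((L + L + Rabs kap) * / m))).
  { intros x y hx hy. unfold wt.
    destruct (Hpsi x hx) as [hx1 _]. destruct (Hpsi y hy) as [hy1 _].
    pose proof (L1 (psi x) (psi y) hx1 hy1). pose proof (L2 (psi x) (psi y) hx1 hy1).
    pose proof (psi_lip x y hx hy).
    replace (C * (K1 (psi x) + K2 (psi x) - kap * psi x) - C * (K1 (psi y) + K2 (psi y) - kap * psi y))
      with (C * ((K1 (psi x) - K1 (psi y)) + (K2 (psi x) - K2 (psi y)) - kap * (psi x - psi y))) by ring.
    rewrite Rabs_mult, (Rabs_pos_eq C) by lra. rewrite Rmult_assoc. apply Rmult_le_compat_l. lra.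
    eapply Rle_trans. apply Rabs_triang. rewrite Rabs_Ropp, Rabs_mult.
    eapply Rle_trans. apply Rplus_le_compat_r. apply Rabs_triang.
    assert (Rabs (psi x - psi y) * (L + L + Rabs kap) <= / m * Rabs (x - y) * (L + L + Rabs kap)).
    { apply Rmult_le_compat_r; auto. pose proof (Rabs_pos kap); lra. }
    pose proof (Rabs_pos kap). nra. }
  set (LW0 := C * ((L + L + Rabs kap) * / m)).
  assert (hLW0 : 0 <= LW0).
  { unfold LW0. apply Rmult_le_pos. lra. apply Rmult_le_pos. pose proof (Rabs_pos kap); lra.
    left; apply Rinv_0_lt_compat; lra. }
  exists (fun x => / 2 * (wt x + 1 * psi x)), (fun x => / 2 * (wt x + -1 * psi x)), (/2 * (LW0 + / m)).
  repeat split.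
  - apply Rmult_le_pos. lra. pose proof (Rinv_0_lt_compat m hm). lra.
  - apply convI_scal. lra. apply slope_convI. apply key; auto.
  - apply convI_scal. lra. apply slope_convI. apply key; auto.
  - apply lipI_scal. lra. apply lipI_add. exact LW.
    apply lipI_ext with psi. intros; ring. exact psi_lip.
  - apply lipI_scal. lra. apply lipI_add. exact LW.
    intros x y hx hy. replace (-1 * psi x - -1 * psi y) with (- (psi x - psi y)) by ring.
    rewrite Rabs_Ropp. apply psi_lip; auto.
  - intros x hx. field.
Qed.


Definition contI (a b : R) (f : R -> R) := forall x, a <= x <= b -> forall eps, 0 < eps ->
  exists eta, 0 < eta /\ forall y, a <= y <= b -> Rabs (y - x) < eta -> Rabs (f y - f x) < eps.

Lemma lip_contI a b f L : 0 <= L -> lipI a b f L -> contI a b f.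
Proof.
  intros hL H x hx eps he. exists (eps / (L + 1)). split.
  apply Rmult_lt_0_compat; [lra| apply Rinv_0_lt_compat; lra].
  intros y hy hxy. pose proof (H y x hy hx).
  assert (L * Rabs (y - x) <= L * (eps / (L + 1))) by (apply Rmult_le_compat_l; lra).
  assert (L * (eps / (L + 1)) < eps).
  { apply Rmult_lt_reg_r with (L + 1). lra. replace (L * (eps / (L + 1)) * (L + 1)) with (L * eps) by (field; lra). nra. }
  lra.
Qed.

Lemma ivt_ed a phi x : 0 < a -> contI 0 a phi -> phi 0 <= x <= phi a -> exists t, 0 <= t <= a /\ phi t = x.
Proof.
  intros ha HC hx.
  set (f := fun t => phi (clamp 0 a t)).
  assert (Cf : continuity f).
  { intros t0. unfold continuity_pt, continue_in, limit1_in, limit_in. intros eps he.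
    destruct (HC (clamp 0 a t0) (clamp_in 0 a t0 ltac:(lra)) eps he) as (eta & heta & Heta).
    exists eta. split. lra. intros t [_ ht]. simpl in *. unfold R_dist in *. unfold f.
    apply Heta. apply clamp_in; lra. eapply Rle_lt_trans. apply clamp_lip. lra. exact ht. }
  assert (f0 : f 0 = phi 0) by (unfold f; rewrite clamp_id; auto; lra).
  assert (fa : f a = phi a) by (unfold f; rewrite clamp_id; auto; lra).
  destruct (IVT_gen f 0 a x Cf) as (t & ht & hft).
  { rewrite f0, fa. unfold Rmin, Rmax; repeat destruct Rle_dec; lra. }
  exists (clamp 0 a t). split. apply clamp_in; lra. exact hft.
Qed.

Lemma sup_arg s t Psi : s < t -> contI s t Psi ->
  (forall tau, s <= tau < t -> exists eta, 0 < eta /\ forall tau', tau < tau' < tau + eta -> tau' <= t -> Psi tau <= Psi tau') ->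
  Psi s <= Psi t.
Proof.
  intros hst HC HR.
  set (E := fun tau => s <= tau <= t /\ Psi s <= Psi tau).
  assert (hb : bound E) by (exists t; intros v [hv _]; lra).
  assert (hne : exists v, E v) by (exists s; split; lra).
  destruct (completeness E hb hne) as [sg [hub hlub]].
  assert (hs : s <= sg) by (apply hub; split; lra).
  assert (ht : sg <= t) by (apply hlub; intros v [hv _]; lra).
  assert (hP : Psi s <= Psi sg).
  { apply Rnot_lt_le. intros hlt.
    destruct (HC sg ltac:(lra) (Psi s - Psi sg) ltac:(lra)) as (eta & heta & Heta).
    assert (exists v, E v /\ sg - eta / 2 < v).
    { apply NNPP; intros Hn. assert (is_upper_bound E (sg - eta / 2)).
      { intros v hv. apply Rnot_lt_le. intros hv2. apply Hn. exists v; auto. }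
      apply hlub in H. lra. }
    destruct H as (v & [hv1 hv2] & hv3). assert (v <= sg) by (apply hub; split; auto).
    pose proof (Heta v hv1 ltac:(rabs_t; lra)). rabsH_t H0; lra. }
  destruct (Req_dec sg t) as [e|ne]. { subst; lra. }
  destruct (HR sg ltac:(lra)) as (eta & heta & Heta).
  set (v := Rmin (sg + eta / 2) t).
  assert (sg < v) by (unfold v, Rmin; destruct Rle_dec; lra).
  assert (v <= t) by (unfold v, Rmin; destruct Rle_dec; lra).
  assert (v < sg + eta) by (unfold v, Rmin; destruct Rle_dec; lra).
  pose proof (Heta v ltac:(lra) H0).
  assert (E v) by (split; lra). apply hub in H3. lra.
Qed.

Lemma fin_min (k : nat) (P : nat -> R -> Prop) :
  (forall i, (i < k)%nat -> exists a, 0 < a /\ forall a', 0 < a' <= a -> P i a') ->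
  exists a, 0 < a /\ forall i, (i < k)%nat -> forall a', 0 < a' <= a -> P i a'.
Proof.
  induction k as [|k IH]; intros H.
  - exists 1. split. lra. intros i hi. lia.
  - destruct IH as (a1 & ha1 & H1). { intros i hi. apply H. lia. }
    destruct (H k ltac:(lia)) as (a2 & ha2 & H2).
    exists (Rmin a1 a2). split. { unfold Rmin; destruct Rle_dec; lra. }
    intros i hi a' ha'. assert (a' <= a1 /\ a' <= a2) by (unfold Rmin in ha'; destruct Rle_dec; lra).
    destruct (Nat.eq_dec i k) as [->|ne].
    + apply H2; lra.
    + apply H1; [lia| lra].
Qed.

Definition invf (phi : R -> R) (a x : R) : R :=
  epsilon (inhabits 0) (fun t => 0 <= t <= a /\ phi t = x).

Lemma invf_spec phi a x : (exists t, 0 <= t <= a /\ phi t = x) -> 0 <= invf phi a x <= a /\ phi (invf phi a x) = x.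
Proof. intros H. unfold invf. apply epsilon_spec. exact H. Qed.

Lemma limR (f : R -> R) l : filterlim f (at_right 0) (locally l) ->
  forall eps, 0 < eps -> exists eta, 0 < eta /\ forall t, 0 < t < eta -> Rabs (f t - l) < eps.
Proof.
  intros H eps he. apply filterlim_locally with (eps := mkposreal eps he) in H.
  destruct H as [eta Heta]. exists eta. split. apply cond_pos.
  intros t ht. apply (Heta t). change (Rabs (t - 0) < eta). rewrite Rminus_0_r, Rabs_pos_eq; lra. lra.
Qed.

Lemma limR_intro (f : R -> R) l :
  (forall eps, 0 < eps -> exists eta, 0 < eta /\ forall t, 0 < t < eta -> Rabs (f t - l) < eps) ->
  filterlim f (at_right 0) (locally l).
Proof.
  intros H. apply filterlim_locally. intros eps. destruct (H eps (cond_pos eps)) as (eta & he & Heta).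
  exists (mkposreal eta he). intros y hy hy0. apply Heta. change (Rabs (y - 0) < eta) in hy.
  rewrite Rminus_0_r, Rabs_pos_eq in hy; simpl in *; lra.
Qed.

Lemma contOn_ed r h : continuous_on_I r h -> contI 0 r h.
Proof.
  intros H x hx eps he. specialize (H x hx).
  apply filterlim_locally with (eps := mkposreal eps he) in H.
  destruct H as [eta Heta]. exists eta. split. apply cond_pos.
  intros y hy hxy. apply (Heta y hxy hy).
Qed.

Lemma contOn_intro r h : contI 0 r h -> continuous_on_I r h.
Proof.
  intros H x hx. apply filterlim_locally. intros eps.
  destruct (H x hx eps (cond_pos eps)) as (eta & he & Heta).
  exists (mkposreal eta he). intros y hy hy0. apply Heta; auto.
Qed.


Lemma mono_glue a m k (fs : nat -> R -> R) h (Phi : R -> R -> R) :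
  0 < a ->
  (forall t, 0 <= t <= a -> exists i, (i < k)%nat /\ h t = fs i t) ->
  (forall i, (i < k)%nat -> contI 0 a (fs i)) -> contI 0 a h ->
  contI 0 a (fun t => Phi t (h t)) ->
  (forall i, (i < k)%nat -> forall s t, 0 <= s -> s < t -> t <= a -> m * (t - s) <= Phi t (fs i t) - Phi s (fs i s)) ->
  forall s t, 0 <= s -> s < t -> t <= a -> m * (t - s) <= Phi t (h t) - Phi s (h s).
Proof.
  intros ha Hcov Cf Ch CP Hm s t hs hst ht.
  set (Psi := fun tau => Phi tau (h tau) - m * tau).
  assert (Psi s <= Psi t).
  { apply sup_arg; auto.
    - intros x hx eps he. destruct (CP x ltac:(lra) (eps / 2) ltac:(lra)) as (e1 & he1 & H1).
      exists (Rmin e1 (eps / (2 * (Rabs m + 1)))). split.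
      { unfold Rmin; destruct Rle_dec; auto. apply Rmult_lt_0_compat. lra. apply Rinv_0_lt_compat. pose proof (Rabs_pos m); lra. }
      intros y hy hxy. assert (Rabs (y - x) < e1) by (unfold Rmin in hxy; destruct Rle_dec; lra).
      assert (Rabs (y - x) < eps / (2 * (Rabs m + 1))) by (unfold Rmin in hxy; destruct Rle_dec; lra).
      pose proof (H1 y ltac:(lra) H). unfold Psi.
      replace (Phi y (h y) - m * y - (Phi x (h x) - m * x)) with ((Phi y (h y) - Phi x (h x)) - m * (y - x)) by ring.
      eapply Rle_lt_trans. apply Rabs_triang. rewrite Rabs_Ropp, Rabs_mult.
      assert (Rabs m * Rabs (y - x) <= (Rabs m + 1) * (eps / (2 * (Rabs m + 1)))).
      { apply Rmult_le_compat; try apply Rabs_pos; lra. }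
      replace ((Rabs m + 1) * (eps / (2 * (Rabs m + 1)))) with (eps / 2) in H3 by (field; pose proof (Rabs_pos m); lra).
      lra.
    - intros tau htau.
      assert (U : exists eta, 0 < eta /\ forall j, (j < k)%nat -> forall eta', 0 < eta' <= eta ->
         (fs j tau = h tau \/ forall tau', 0 <= tau' <= a -> Rabs (tau' - tau) < eta' -> fs j tau' <> h tau')).
      { apply fin_min. intros j hj.
        destruct (Req_dec (fs j tau) (h tau)) as [e|ne].
        - exists 1. split. lra. intros; left; auto.
        - set (dd := Rabs (fs j tau - h tau)). assert (hd : 0 < dd) by (unfold dd; apply Rabs_pos_lt; lra).
          destruct (Cf j hj tau ltac:(lra) (dd / 2) ltac:(lra)) as (e1 & he1 & H1).
          destruct (Ch tau ltac:(lra) (dd / 2) ltac:(lra)) as (e2 & he2 & H2).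
          exists (Rmin e1 e2). split. { unfold Rmin; destruct Rle_dec; lra. }
          intros eta' heta'. right. intros tau' htau' hd' Heq.
          assert (Rabs (tau' - tau) < e1) by (unfold Rmin in heta'; destruct Rle_dec; lra).
          assert (Rabs (tau' - tau) < e2) by (unfold Rmin in heta'; destruct Rle_dec; lra).
          pose proof (H1 tau' htau' H). pose proof (H2 tau' htau' H0).
          rewrite Heq in H3. clear hd. revert H3 H4. unfold dd. rabs_t; lra. }
      destruct U as (eta & heta & HU).
      exists eta. split; auto. intros tau' htau' ht'.
      destruct (Hcov tau' ltac:(lra)) as (j & hj & ej).
      destruct (HU j hj eta ltac:(lra)) as [e|e].
      + unfold Psi. pose proof (Hm j hj tau tau' ltac:(lra) ltac:(lra) ltac:(lra)).
        rewrite ej, <- e. lra.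
      + exfalso. apply (e tau' ltac:(lra) ltac:(rabs_t; lra)). auto. }
  unfold Psi in H. lra.
Qed.


Definition Pc (F1 : pt2 -> R) (u : R -> R) (c a0 a' : R) :=
  a' <= a0 /\ exists K1 K2 L kap, 0 <= L /\ convI 0 a' K1 /\ convI 0 a' K2 /\
    lipI 0 a' K1 L /\ lipI 0 a' K2 L /\
    (forall t, 0 <= t <= a' -> F1 (t, u t) = K1 t - K2 t) /\
    (forall s t, 0 <= s -> s < t -> t <= a' -> c / 2 <= sl (fun t => F1 (t, u t)) s t) /\
    (forall s t, 0 <= s -> s < t -> t <= a' -> kap <= sl K1 s t + sl K2 s t <= kap + c / 6).

Lemma F_diff (D : pt2 -> Prop) g h F1 Lg x y y' : lip2 D g Lg -> lip2 D h Lg ->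
  (forall p, D p -> F1 p = g p - h p) -> D (x, y) -> D (x, y') ->
  Rabs (F1 (x, y) - F1 (x, y')) <= 2 * Lg * Rabs (y - y').
Proof.
  intros Lgg Lh E d1 d2. rewrite !E by auto.
  pose proof (Lgg _ _ d1 d2). pose proof (Lh _ _ d1 d2). simpl in *.
  replace (x - x) with 0 in * by ring. rewrite Rabs_R0 in *.
  replace (g (x, y) - h (x, y) - (g (x, y') - h (x, y'))) with ((g (x, y) - g (x, y')) - (h (x, y) - h (x, y'))) by ring.
  eapply Rle_trans. apply Rabs_triang. rewrite Rabs_Ropp. lra.
Qed.

Lemma per_curve (D : pt2 -> Prop) (g h F1 : pt2 -> R) Lg c a0 u :
  convex_set2 D -> convex_on2 D g -> convex_on2 D h -> lip2 D g Lg -> lip2 D h Lg -> 0 <= Lg -> 0 < c -> 0 < a0 ->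
  (forall p, D p -> F1 p = g p - h p) ->
  (forall eps, 0 < eps -> exists eta, 0 < eta /\ forall t, 0 < t < eta -> Rabs (F1 (t, 0) / t - c) < eps) ->
  F1 (0, 0) = 0 ->
  DCI 0 a0 u -> u 0 = 0 -> (forall t, 0 <= t <= a0 -> D (t, u t) /\ D (t, 0)) ->
  (forall eps, 0 < eps -> exists eta, 0 < eta /\ forall t, 0 < t < eta -> Rabs (u t / t) < eps) ->
  exists a, 0 < a /\ forall a', 0 < a' <= a -> Pc F1 u c a0 a'.
Proof.
  intros HD Cg Ch Lgg Lh hLg hc ha0 EF HF0 F00 Du u0 HDu Hu.
  assert (HDu1 : forall t, 0 <= t <= a0 -> D (t, u t)) by (intros t ht; apply (HDu t ht)).
  assert (HDu2 : forall t, 0 <= t <= a0 -> D (t, 0)) by (intros t ht; apply (HDu t ht)).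
  set (phi := fun t => F1 (t, u t)).
  assert (Dphi : DCI 0 a0 phi).
  { apply DCI_ext with (fun t => g (t, u t) - h (t, u t)).
    { intros t ht. unfold phi. rewrite EF; auto. }
    apply DCI_sub; (eapply DCI_comp; [exact HD| | | exact hLg | apply DCI_id | exact Du | intros t ht; apply HDu1; auto]); eauto. }
  destruct Dphi as (K1 & K2 & L & hL & C1 & C2 & L1 & L2 & E).
  set (e1 := c / 12).
  destruct (inf_slopes a0 K1 L ha0 (convI_slope _ _ _ C1) L1 e1 ltac:(unfold e1; lra)) as (a1 & k1 & ha1 & ha1' & S1).
  destruct (inf_slopes a0 K2 L ha0 (convI_slope _ _ _ C2) L2 e1 ltac:(unfold e1; lra)) as (a2 & k2 & ha2 & ha2' & S2).
  set (a3 := Rmin a1 a2).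
  assert (ha3 : 0 < a3 /\ a3 <= a1 /\ a3 <= a2) by (unfold a3, Rmin; destruct Rle_dec; lra).
  destruct (HF0 (e1 / 2) ltac:(unfold e1; lra)) as (n1 & hn1 & N1).
  destruct (Hu (e1 / (2 * (2 * Lg + 1))) ltac:(apply Rmult_lt_0_compat; [unfold e1; lra| apply Rinv_0_lt_compat; lra])) as (n2 & hn2 & N2).
  set (t0 := Rmin a3 (Rmin (n1 / 2) (n2 / 2))).
  assert (ht0 : 0 < t0 /\ t0 <= a3 /\ t0 < n1 /\ t0 < n2) by (unfold t0, Rmin; repeat destruct Rle_dec; lra).
  assert (ph0 : phi 0 = 0) by (unfold phi; rewrite u0; auto).
  assert (sl0 : Rabs (sl phi 0 t0 - c) < e1).
  { unfold sl. rewrite ph0. replace (t0 - 0) with t0 by ring.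
    pose proof (N1 t0 ltac:(lra)). pose proof (N2 t0 ltac:(lra)).
    assert (hD : Rabs (F1 (t0, u t0) - F1 (t0, 0)) <= 2 * Lg * Rabs (u t0 - 0)).
    { apply (F_diff D g h F1 Lg); auto; [apply HDu1| apply HDu2]; lra. }
    rewrite Rminus_0_r in hD.
    replace ((phi t0 - 0) / t0 - c) with ((F1 (t0, 0) / t0 - c) + (F1 (t0, u t0) - F1 (t0, 0)) / t0)
      by (unfold phi; field; lra).
    eapply Rle_lt_trans. apply Rabs_triang.
    rewrite Rabs_div by lra. rewrite (Rabs_pos_eq t0) by lra.
    rewrite Rabs_div in H0 by lra. rewrite (Rabs_pos_eq t0) in H0 by lra.
    assert (Rabs (F1 (t0, u t0) - F1 (t0, 0)) / t0 <= 2 * Lg * (Rabs (u t0) / t0)).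
    { unfold Rdiv. rewrite <- Rmult_assoc. apply Rmult_le_compat_r. left; apply Rinv_0_lt_compat; lra. exact hD. }
    assert (2 * Lg * (Rabs (u t0) / t0) <= 2 * Lg * (e1 / (2 * (2 * Lg + 1)))).
    { apply Rmult_le_compat_l; lra. }
    assert (2 * Lg * (e1 / (2 * (2 * Lg + 1))) < e1 / 2).
    { apply Rmult_lt_reg_r with (2 * (2 * Lg + 1)). lra.
      replace (2 * Lg * (e1 / (2 * (2 * Lg + 1))) * (2 * (2 * Lg + 1))) with (2 * Lg * e1) by (field; lra).
      unfold e1. nra. }
    lra. }
  assert (slE : forall s t, 0 <= s -> s < t -> t <= a0 -> sl phi s t = sl K1 s t - sl K2 s t).
  { intros s t hs hst ht. unfold sl. rewrite !E by lra. field. lra. }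
  pose proof (S1 0 t0 ltac:(lra) ltac:(lra) ltac:(lra)). pose proof (S2 0 t0 ltac:(lra) ltac:(lra) ltac:(lra)).
  rewrite (slE 0 t0 ltac:(lra) ltac:(lra) ltac:(lra)) in sl0.
  assert (hk : c - 2 * e1 <= k1 - k2) by (rabsH_t sl0; lra).
  exists a3. split. lra. intros a' ha'. split. lra.
  exists K1, K2, L, (k1 + k2). repeat split; auto.
  - eapply convI_restr; [| |exact C1]; lra.
  - eapply convI_restr; [| |exact C2]; lra.
  - eapply lipI_restr; [| |exact L1]; lra.
  - eapply lipI_restr; [| |exact L2]; lra.
  - intros t ht. apply E. lra.
  - intros s t hs hst ht. fold phi. rewrite slE by lra.
    pose proof (S1 s t hs hst ltac:(lra)). pose proof (S2 s t hs hst ltac:(lra)). unfold e1 in *. lra.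
  - pose proof (S1 s t H1 H2 ltac:(lra)). pose proof (S2 s t H1 H2 ltac:(lra)). unfold e1 in *. lra.
  - pose proof (S1 s t H1 H2 ltac:(lra)). pose proof (S2 s t H1 H2 ltac:(lra)). unfold e1 in *. lra.
Qed.


Lemma DCI_comp1 a b u psi : 0 < a -> DCI 0 a u -> DCI 0 b psi -> (forall x, 0 <= x <= b -> 0 <= psi x <= a) ->
  DCI 0 b (fun x => u (psi x)).
Proof.
  intros ha (P & Q & L & hL & CP & CQ & LP & LQ & E) Dpsi Hr.
  set (Dst := fun p : pt2 => 0 <= fst p <= a).
  assert (cD : convex_set2 Dst).
  { intros p q l hp hq hl. unfold Dst, comb2 in *; simpl. nra. }
  assert (gen : forall P', convI 0 a P' -> lipI 0 a P' L -> DCI 0 b (fun x => P' (psi x))).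
  { intros P' C' L'.
    apply (DCI_comp Dst (fun p => P' (fst p)) L 0 b psi (fun _ => 0)); [exact cD| | |exact hL|exact Dpsi|apply DCI_zero|].
    - intros p q l hp hq hl. unfold comb2; simpl. apply C'; auto.
    - intros p q hp hq. simpl. pose proof (L' _ _ hp hq). pose proof (Rabs_pos (snd p - snd q)). nra.
    - intros t ht. unfold Dst; simpl. auto. }
  apply DCI_ext with (fun x => P (psi x) - Q (psi x)).
  { intros x hx. rewrite E; auto. }
  apply DCI_sub; apply gen; auto.
Qed.

Lemma sqr_convex d : convex_set2 (sqr d).
Proof. intros p q l [h1 h2] [h3 h4] hl. unfold comb2, sqr; simpl. split; nra. Qed.

Lemma conv_restr (U D : pt2 -> Prop) g : (forall p, D p -> U p) -> convex_on2 U g -> convex_on2 D g.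
Proof. intros H C p q l hp hq hl. apply C; auto. Qed.

Lemma lip2_mono D g L L' : L <= L' -> lip2 D g L -> lip2 D g L'.
Proof. intros h H p q hp hq. pose proof (H p q hp hq). pose proof (Rabs_pos (fst p - fst q)); pose proof (Rabs_pos (snd p - snd q)). nra. Qed.

Lemma closed_union2 (A B : pt2 -> Prop) : closed A -> closed B -> closed (fun x => A x \/ B x).
Proof.
  intros hA hB x Hx. destruct (classic (A x)) as [a|na]; [left; auto|].
  destruct (classic (B x)) as [b|nb]; [right; auto|]. exfalso. apply Hx.
  assert (lA : locally x (fun y => ~ A y)) by (apply NNPP; intros h; apply na; apply hA; auto).
  assert (lB : locally x (fun y => ~ B y)) by (apply NNPP; intros h; apply nb; apply hB; auto).
  generalize (filter_and _ _ lA lB). apply filter_imp. intros y [h1 h2] [h|h]; auto.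
Qed.

Lemma closed_finunion (k : nat) (C : nat -> pt2 -> Prop) : (forall i, (i < k)%nat -> closed (C i)) ->
  closed (fun x => exists i, (i < k)%nat /\ C i x).
Proof.
  induction k as [|k IH]; intros H.
  - eapply closed_ext; [|apply closed_false]. intros x; split; [tauto| intros (i & hi & _); lia].
  - eapply closed_ext; [|apply (closed_union2 _ _ (IH ltac:(intros; apply H; lia)) (H k ltac:(lia)))].
    intros x; split.
    + intros [(i & hi & hc)|hc]; [exists i; split; auto; lia| exists k; split; auto].
    + intros (i & hi & hc). destruct (Nat.eq_dec i k) as [->|ne]; [right; auto| left; exists i; split; auto; lia].
Qed.

Lemma cont_lip2 (f : pt2 -> R) K : 0 <= K -> (forall p q, Rabs (f p - f q) <= K * (Rabs (fst p - fst q) + Rabs (snd p - snd q))) ->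
  forall x, filterlim f (locally x) (locally (f x)).
Proof.
  intros hK H [x1 x2]. apply filterlim_locally. intros eps.
  assert (hd : 0 < eps / (2 * K + 1)) by (apply Rmult_lt_0_compat; [apply cond_pos| apply Rinv_0_lt_compat; lra]).
  exists (mkposreal _ hd). intros [y1 y2] [h1 h2]. change (Rabs (f (y1, y2) - f (x1, x2)) < eps).
  change (Rabs (y1 - x1) < eps / (2 * K + 1)) in h1. change (Rabs (y2 - x2) < eps / (2 * K + 1)) in h2.
  pose proof (H (y1, y2) (x1, x2)) as H0. simpl in H0. pose proof (cond_pos eps).
  assert (K * (Rabs (y1 - x1) + Rabs (y2 - x2)) <= K * (2 * (eps / (2 * K + 1)))) by (apply Rmult_le_compat_l; lra).
  assert (K * (2 * (eps / (2 * K + 1))) < eps).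
  { apply Rmult_lt_reg_r with (2 * K + 1). lra. replace (K * (2 * (eps / (2 * K + 1))) * (2 * K + 1)) with (2 * K * eps) by (field; lra). nra. }
  eapply Rle_lt_trans; [exact H0|]. lra.
Qed.

Lemma cont_lip2p (f : pt2 -> pt2) K : 0 <= K ->
  (forall p q, Rabs (fst (f p) - fst (f q)) <= K * (Rabs (fst p - fst q) + Rabs (snd p - snd q))) ->
  (forall p q, Rabs (snd (f p) - snd (f q)) <= K * (Rabs (fst p - fst q) + Rabs (snd p - snd q))) ->
  forall x, filterlim f (locally x) (locally (f x)).
Proof.
  intros hK H1 H2 x. apply filterlim_locally. intros eps.
  pose proof (cont_lip2 (fun p => fst (f p)) K hK H1 x) as C1.
  pose proof (cont_lip2 (fun p => snd (f p)) K hK H2 x) as C2.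
  apply filterlim_locally with (eps := eps) in C1. apply filterlim_locally with (eps := eps) in C2.
  generalize (filter_and _ _ C1 C2). apply filter_imp. intros y [h1 h2]. split; auto.
Qed.

Lemma closed_piece (S : pt2 -> Prop) b psi u G K : 0 <= K -> closed S ->
  (forall x y, Rabs (psi x - psi y) <= K * Rabs (x - y)) ->
  (forall x y, Rabs (u (psi x) - u (psi y)) <= K * Rabs (x - y)) ->
  (forall x y, Rabs (G x - G y) <= K * Rabs (x - y)) ->
  closed (fun q : pt2 => (0 <= fst q /\ fst q <= b) /\ snd q - G (fst q) = 0 /\ S (psi (fst q), u (psi (fst q)))).
Proof.
  intros hK hS Hp Hu HG.
  assert (Cf : forall x : pt2, filterlim (fun q : pt2 => fst q) (locally x) (locally (fst x))).
  { apply cont_lip2 with 1. lra. intros p q. pose proof (Rabs_pos (snd p - snd q)). lra. }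
  apply closed_and; [apply closed_and|apply closed_and].
  - apply (closed_comp (fun q : pt2 => fst q) (fun u => 0 <= u)); auto. apply closed_ge.
  - apply (closed_comp (fun q : pt2 => fst q) (fun u => u <= b)); auto. apply closed_le.
  - apply (closed_comp (fun q : pt2 => snd q - G (fst q)) (fun u => u = 0)); [|apply closed_eq].
    apply cont_lip2 with (K + 1). lra. intros p q.
    replace (snd p - G (fst p) - (snd q - G (fst q))) with ((snd p - snd q) - (G (fst p) - G (fst q))) by ring.
    eapply Rle_trans. apply Rabs_triang. rewrite Rabs_Ropp. pose proof (HG (fst p) (fst q)).
    pose proof (Rabs_pos (snd p - snd q)); pose proof (Rabs_pos (fst p - fst q)). nra.
  - apply (closed_comp (fun q : pt2 => (psi (fst q), u (psi (fst q)))) S); auto.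
    apply cont_lip2p with K; auto; intros p q; simpl.
    + pose proof (Hp (fst p) (fst q)). pose proof (Rabs_pos (snd p - snd q)). nra.
    + pose proof (Hu (fst p) (fst q)). pose proof (Rabs_pos (snd p - snd q)). nra.
Qed.

Lemma contI_restr a b a' b' f : a <= a' -> b' <= b -> contI a b f -> contI a' b' f.
Proof.
  intros h1 h2 H x hx eps he. destruct (H x ltac:(lra) eps he) as (eta & he' & H').
  exists eta. split; auto. intros y hy hxy. apply H'; auto; lra.
Qed.

Lemma comp_cont (D : pt2 -> Prop) Phi L a b K psi u :
  0 <= L -> 0 <= K -> lip2 D Phi L ->
  (forall x, 0 <= x <= b -> 0 <= psi x <= a) ->
  (forall x y, 0 <= x <= b -> 0 <= y <= b -> Rabs (psi x - psi y) <= K * Rabs (x - y)) ->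
  contI 0 a u -> (forall t, 0 <= t <= a -> D (t, u t)) ->
  contI 0 b (fun x => Phi (psi x, u (psi x))).
Proof.
  intros hL hK HL Hr Hp Cu HD x hx eps he.
  set (e' := eps / (2 * (L + 1))).
  assert (he' : 0 < e') by (unfold e'; apply Rmult_lt_0_compat; [lra| apply Rinv_0_lt_compat; lra]).
  destruct (Cu (psi x) (Hr x hx) e' he') as (n1 & hn1 & N1).
  set (eta := Rmin n1 e' / (K + 1)).
  assert (hm : 0 < Rmin n1 e' /\ Rmin n1 e' <= n1 /\ Rmin n1 e' <= e') by (unfold Rmin; destruct Rle_dec; lra).
  exists eta. split. { unfold eta. apply Rmult_lt_0_compat. lra. apply Rinv_0_lt_compat; lra. }
  intros y hy hxy.
  pose proof (Hp y x hy hx).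
  assert (hpp : Rabs (psi y - psi x) < Rmin n1 e').
  { assert (K * Rabs (y - x) <= K * eta) by (apply Rmult_le_compat_l; lra).
    assert (K * eta < Rmin n1 e').
    { unfold eta. apply Rmult_lt_reg_r with (K + 1). lra.
      replace (K * (Rmin n1 e' / (K + 1)) * (K + 1)) with (K * Rmin n1 e') by (field; lra). nra. }
    lra. }
  pose proof (N1 (psi y) (Hr y hy) ltac:(lra)).
  pose proof (HL _ _ (HD _ (Hr y hy)) (HD _ (Hr x hx))). simpl in H1.
  assert (L * (Rabs (psi y - psi x) + Rabs (u (psi y) - u (psi x))) <= L * (2 * e')) by (apply Rmult_le_compat_l; lra).
  assert (L * (2 * e') < eps).
  { unfold e'. apply Rmult_lt_reg_r with (L + 1). lra.
    replace (L * (2 * (eps / (2 * (L + 1)))) * (L + 1)) with (L * eps) by (field; lra). nra. }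
  lra.
Qed.

Lemma inverse_basic phi a m b psi : 0 < a -> 0 < m -> b = m * a -> phi 0 = 0 -> contI 0 a phi ->
  (forall s t, 0 <= s -> s < t -> t <= a -> m * (t - s) <= phi t - phi s) ->
  (forall x, psi x = invf phi a (clamp 0 b x)) ->
  (forall x, 0 <= psi x <= a) /\ (forall x, 0 <= x <= b -> phi (psi x) = x) /\
  (forall x y, Rabs (psi x - psi y) <= / m * Rabs (x - y)) /\
  (forall t, 0 <= t <= a -> 0 <= phi t) /\ (forall t, 0 <= t <= a -> phi t <= b -> psi (phi t) = t).
Proof.
  intros ha hm hb p0 Cp Hm Epsi.
  assert (hb0 : 0 < b) by (subst; nra).
  assert (pa : b <= phi a) by (pose proof (Hm 0 a ltac:(lra) ha ltac:(lra)); subst; lra).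
  assert (spec : forall x, 0 <= psi x <= a /\ phi (psi x) = clamp 0 b x).
  { intros x. rewrite Epsi. apply invf_spec. apply ivt_ed; auto. pose proof (clamp_in 0 b x ltac:(lra)). lra. }
  assert (inj : forall s t, 0 <= s <= a -> 0 <= t <= a -> m * Rabs (t - s) <= Rabs (phi t - phi s)).
  { intros s t hs ht. destruct (Rtotal_order s t) as [h|[h|h]].
    - pose proof (Hm s t ltac:(lra) h ltac:(lra)). rabs_t; nra.
    - subst. replace (t - t) with 0 by ring. rewrite Rabs_R0. rabs_t; lra.
    - pose proof (Hm t s ltac:(lra) h ltac:(lra)). rabs_t; nra. }
  assert (pos : forall t, 0 <= t <= a -> 0 <= phi t).
  { intros t ht. destruct (Req_dec t 0) as [->|ne]. lra. pose proof (Hm 0 t ltac:(lra) ltac:(lra) ltac:(lra)). nra. }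
  split; [intros x; apply spec|]. split.
  { intros x hx. rewrite (proj2 (spec x)). apply clamp_id; auto. }
  split.
  { intros x y. destruct (spec x) as [h1 e1]. destruct (spec y) as [h2 e2].
    pose proof (inj (psi y) (psi x) h2 h1). rewrite e1, e2 in H.
    pose proof (clamp_lip 0 b x y ltac:(lra)).
    apply Rmult_le_reg_l with m. auto. replace (m * (/ m * Rabs (x - y))) with (Rabs (x - y)) by (field; lra). lra. }
  split; auto.
  intros t ht hpt. destruct (spec (phi t)) as [h1 e1]. rewrite clamp_id in e1 by (split; auto).
  pose proof (inj t (psi (phi t)) ht h1). rewrite e1 in H. replace (phi t - phi t) with 0 in H by ring.
  rewrite Rabs_R0 in H. assert (Rabs (psi (phi t) - t) <= 0) by (apply Rmult_le_reg_l with m; lra).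
  pose proof (Rabs_pos (psi (phi t) - t)). assert (Rabs (psi (phi t) - t) = 0) by lra.
  apply Rabs_eq_0 in H2. lra.
Qed.


Lemma rel_lemma (F : pt2 -> pt2) (u psi : R -> R) a b (X : R -> Prop) :
  (forall x, 0 <= psi x <= a) -> (forall x, 0 <= x <= b -> fst (F (psi x, u (psi x))) = x) ->
  (forall t, 0 <= t <= a -> 0 <= fst (F (t, u t))) ->
  (forall t, 0 <= t <= a -> fst (F (t, u t)) <= b -> psi (fst (F (t, u t))) = t) ->
  forall q, (exists t, 0 <= t <= a /\ X t /\ F (t, u t) = q /\ fst q <= b) <->
    ((0 <= fst q /\ fst q <= b) /\ snd q = snd (F (psi (fst q), u (psi (fst q)))) /\ X (psi (fst q))).
Proof.
  intros Hr Hb Hp He q. split.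
  - intros (t & ht & hX & <- & hq). pose proof (Hp t ht). rewrite (He t ht hq). auto.
  - intros ((h1 & h2) & h3 & h4). exists (psi (fst q)). split; auto. split; auto. split; auto.
    apply injective_projections; auto.
Qed.

Lemma lip2_F (D : pt2 -> Prop) g h F1 Lg : lip2 D g Lg -> lip2 D h Lg ->
  (forall p, D p -> F1 p = g p - h p) -> lip2 D F1 (2 * Lg).
Proof.
  intros Lg1 Lh E p q hp hq. rewrite !E by auto.
  pose proof (Lg1 p q hp hq). pose proof (Lh p q hp hq).
  replace (g p - h p - (g q - h q)) with ((g p - g q) - (h p - h q)) by ring.
  eapply Rle_trans. apply Rabs_triang. rewrite Rabs_Ropp. lra.
Qed.


Theorem lemma5p10 (G : pt2 -> Prop) (c : R) (F : pt2 -> pt2) (S : pt2 -> Prop) :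
  open G -> G (0, 0) -> 0 < c ->
  locally_DC G F -> F (0, 0) = (0, 0) ->
  dir_deriv2 F (0, 0) (1, 0) (c, 0) ->
  (forall p, S p -> G p) -> s_set S ->
  exists a b, 0 < a /\ 0 < b /\
    s_set (fun q => (exists p, S p /\ fst p <= a /\ F p = q) /\ fst q <= b).
Proof.
  intros HG G0 hc HDC F0 Hd HSG HS.
  destruct HS as ((p0 & Sp0) & ClS & r & hr & (k & f & Hf & Hcov) & (H & Hcont & HSH)).
  destruct (HDC (0,0) G0) as (U & oU & cU & U0 & UG & (g1 & h1 & Cg1 & Ch1 & E1) & (g2 & h2 & Cg2 & Ch2 & E2)).
  destruct (open_sqr U oU U0) as (d0 & hd0 & Hsq).
  destruct (convex2_lip U g1 d0 Cg1 hd0 Hsq) as (La & hLa & LLa).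
  destruct (convex2_lip U h1 d0 Ch1 hd0 Hsq) as (Lb & hLb & LLb).
  destruct (convex2_lip U g2 d0 Cg2 hd0 Hsq) as (Lc & hLc & LLc).
  destruct (convex2_lip U h2 d0 Ch2 hd0 Hsq) as (Ld & hLd & LLd).
  set (dl := d0 / 2). set (Lg := La + Lb + Lc + Ld). set (D := sqr dl).
  assert (hdl : 0 < dl) by (unfold dl; lra).
  assert (hLg : 0 <= Lg) by (unfold Lg; lra).
  assert (DU : forall p, D p -> U p).
  { intros p [q1 q2]. apply Hsq. unfold dl in *. split; lra. }
  assert (cD : convex_set2 D) by apply sqr_convex.
  assert (Lg1 : lip2 D g1 Lg) by (eapply lip2_mono; [|exact LLa]; unfold Lg; lra).
  assert (Lh1 : lip2 D h1 Lg) by (eapply lip2_mono; [|exact LLb]; unfold Lg; lra).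
  assert (Lg2 : lip2 D g2 Lg) by (eapply lip2_mono; [|exact LLc]; unfold Lg; lra).
  assert (Lh2 : lip2 D h2 Lg) by (eapply lip2_mono; [|exact LLd]; unfold Lg; lra).
  assert (Cg1' : convex_on2 D g1) by (eapply conv_restr; eauto).
  assert (Ch1' : convex_on2 D h1) by (eapply conv_restr; eauto).
  assert (Cg2' : convex_on2 D g2) by (eapply conv_restr; eauto).
  assert (Ch2' : convex_on2 D h2) by (eapply conv_restr; eauto).
  set (F1 := fun p => fst (F p)). set (F2 := fun p => snd (F p)).
  assert (EF1 : forall p, D p -> F1 p = g1 p - h1 p) by (intros; apply E1; auto).
  assert (EF2 : forall p, D p -> F2 p = g2 p - h2 p) by (intros; apply E2; auto).
  assert (LF1 : lip2 D F1 (2 * Lg)) by (apply (lip2_F D g1 h1 F1 Lg); auto).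
  assert (LF2 : lip2 D F2 (2 * Lg)) by (apply (lip2_F D g2 h2 F2 Lg); auto).
  assert (F10 : F1 (0, 0) = 0) by (unfold F1; rewrite F0; auto).
  assert (F20 : F2 (0, 0) = 0) by (unfold F2; rewrite F0; auto).
  destruct Hd as [Hd1 Hd2].
  assert (HF1 : forall eps, 0 < eps -> exists eta, 0 < eta /\ forall t, 0 < t < eta -> Rabs (F1 (t, 0) / t - c) < eps).
  { intros eps he. destruct (limR _ _ Hd1 eps he) as (eta & he' & H'). exists eta; split; auto.
    intros t ht. specialize (H' t ht). cbv beta in H'. rewrite F0 in H'. cbn [fst snd] in H'.
    replace (0 + t * 1) with t in H' by ring. replace (0 + t * 0) with 0 in H' by ring.
    rewrite Rminus_0_r in H'. exact H'. }
  assert (HF2 : forall eps, 0 < eps -> exists eta, 0 < eta /\ forall t, 0 < t < eta -> Rabs (F2 (t, 0) / t) < eps).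
  { intros eps he. destruct (limR _ _ Hd2 eps he) as (eta & he' & H'). exists eta; split; auto.
    intros t ht. specialize (H' t ht). cbv beta in H'. rewrite F0 in H'. cbn [fst snd] in H'.
    replace (0 + t * 1) with t in H' by ring. replace (0 + t * 0) with 0 in H' by ring.
    rewrite !Rminus_0_r in H'. exact H'. }
  assert (Hfi : forall i, (i < k)%nat -> DCI 0 r (f i) /\ f i 0 = 0 /\
      (forall eps, 0 < eps -> exists eta, 0 < eta /\ forall t, 0 < t < eta -> Rabs (f i t / t) < eps)).
  { intros i hi. destruct (Hf i hi) as ((gg & DCg & Eg) & f0 & lim). split; [|split; auto].
    - apply DCI_ext with gg. intros; symmetry; auto. apply DCI_DCR_fun; auto; lra.
    - intros eps he. destruct (limR _ _ lim eps he) as (eta & he' & H'). exists eta; split; auto.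
      intros t ht. specialize (H' t ht). cbv beta in H'. rewrite f0, !Rminus_0_r in H'. exact H'. }
  destruct (fin_min k (fun i a => forall t, 0 <= t <= a -> Rabs (f i t) <= t)) as (af & haf & Haf).
  { intros i hi. destruct (Hfi i hi) as (_ & f0 & lim). destruct (lim 1 ltac:(lra)) as (eta & he & He).
    exists (eta / 2). split. lra. intros a' ha' t ht. destruct (Req_dec t 0) as [->|ne].
    - rewrite f0, Rabs_R0. lra.
    - pose proof (He t ltac:(lra)). rewrite Rabs_div in H0 by lra. rewrite (Rabs_pos_eq t) in H0 by lra.
      assert (Rabs (f i t) = Rabs (f i t) / t * t) by (field; lra). nra. }
  set (a0 := Rmin r (Rmin dl af)).
  assert (ha0 : 0 < a0 /\ a0 <= r /\ a0 <= dl /\ a0 <= af) by (unfold a0, Rmin; repeat destruct Rle_dec; lra).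
  assert (HDf : forall i, (i < k)%nat -> forall t, 0 <= t <= a0 -> D (t, f i t) /\ D (t, 0)).
  { intros i hi t ht. pose proof (Haf i hi af ltac:(lra) t ltac:(lra)).
    split; split; simpl; try lra; rabsH_t H0; lra. }
  destruct (fin_min k (fun i a' => Pc F1 (f i) c a0 a')) as (a1 & ha1 & Ha1).
  { intros i hi. destruct (Hfi i hi) as (DCf & f0 & lim).
    apply (per_curve D g1 h1 F1 Lg c a0 (f i)); auto; try lra.
    - eapply DCI_restr; [| |exact DCf]; lra. }
  set (a := Rmin a1 a0).
  assert (ha : 0 < a /\ a <= a1 /\ a <= a0) by (unfold a, Rmin; destruct Rle_dec; lra).
  set (m := c / 2). set (b := m * a).
  assert (hm : 0 < m) by (unfold m; lra).
  assert (hb : 0 < b) by (unfold b; nra).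
  assert (HPi : forall i, (i < k)%nat -> Pc F1 (f i) c a0 a) by (intros i hi; apply Ha1; auto; lra).
  assert (Hfa : forall i, (i < k)%nat -> DCI 0 a (f i)).
  { intros i hi. destruct (Hfi i hi) as (DCf & _ & _). eapply DCI_restr; [| |exact DCf]; lra. }
  assert (Cfa : forall i, (i < k)%nat -> contI 0 a (f i)).
  { intros i hi. destruct (DCI_lip _ _ _ (Hfa i hi)) as (Lf & hLf & LLf). eapply lip_contI; eauto. }
  assert (HDa : forall i, (i < k)%nat -> forall t, 0 <= t <= a -> D (t, f i t)).
  { intros i hi t ht. apply (HDf i hi t). lra. }
  assert (Mono : forall i, (i < k)%nat -> forall s t, 0 <= s -> s < t -> t <= a ->
     m * (t - s) <= F1 (t, f i t) - F1 (s, f i s)).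
  { intros i hi s t hs hst ht. destruct (HPi i hi) as (_ & K1 & K2 & L & kap & hL & C1 & C2 & L1 & L2 & E & Sl & Sw).
    pose proof (Sl s t hs hst ht). pose proof (sl_mul (fun t => F1 (t, f i t)) s t ltac:(lra)) as Em.
    cbv beta in Em. rewrite Em. unfold m. apply Rmult_le_compat_r; lra. }
  assert (id_range : forall x, 0 <= x <= a -> 0 <= (fun t : R => t) x <= a) by auto.
  assert (id_lip : forall x y, 0 <= x <= a -> 0 <= y <= a -> Rabs ((fun t : R => t) x - (fun t : R => t) y) <= 1 * Rabs (x - y)) by (intros; lra).
  assert (Cphi : forall i, (i < k)%nat -> contI 0 a (fun t => F1 (t, f i t))).
  { intros i hi. apply (comp_cont D F1 (2 * Lg) a a 1 (fun t => t) (f i)); auto; lra. }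
  set (psi_ := fun i x => invf (fun t => F1 (t, f i t)) a (clamp 0 b x)).
  set (G_ := fun i x => F2 (psi_ i x, f i (psi_ i x))).
  assert (PI : forall i, (i < k)%nat ->
    ((forall x, 0 <= psi_ i x <= a) /\ (forall x, 0 <= x <= b -> F1 (psi_ i x, f i (psi_ i x)) = x) /\
     (forall t, 0 <= t <= a -> 0 <= F1 (t, f i t)) /\
     (forall t, 0 <= t <= a -> F1 (t, f i t) <= b -> psi_ i (F1 (t, f i t)) = t)) /\
    (exists K, 0 <= K /\ (forall x y, Rabs (psi_ i x - psi_ i y) <= K * Rabs (x - y)) /\
       (forall x y, Rabs (f i (psi_ i x) - f i (psi_ i y)) <= K * Rabs (x - y)) /\
       (forall x y, Rabs (G_ i x - G_ i y) <= K * Rabs (x - y))) /\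
    DCR_on b (G_ i) /\ G_ i 0 = 0 /\ filterlim (fun t => (G_ i t - G_ i 0) / t) (at_right 0) (locally 0)).
  { intros i hi. destruct (Hfi i hi) as (_ & f0 & limf).
    assert (phi0 : F1 (0, f i 0) = 0) by (rewrite f0; exact F10).
    destruct (inverse_basic (fun t => F1 (t, f i t)) a m b (psi_ i) ltac:(lra) hm eq_refl phi0 (Cphi i hi)
       (Mono i hi) (fun x => eq_refl)) as (R1 & R2 & R3 & R4 & R5).
    cbv beta in R2, R4, R5.
    assert (psi0 : psi_ i 0 = 0).
    { pose proof (R5 0 ltac:(lra) ltac:(rewrite phi0; lra)). rewrite phi0 in H0. exact H0. }
    assert (HDp : forall x, D (psi_ i x, f i (psi_ i x))) by (intros x; apply HDa; auto).
    split; [split; auto|]. split.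
    { destruct (DCI_lip _ _ _ (Hfa i hi)) as (Lf & hLf & LLf).
      assert (hmi : 0 < / m) by (apply Rinv_0_lt_compat; lra).
      set (K := / m + Lf * / m + 2 * Lg * (/ m + Lf * / m)).
      assert (q1 : 0 <= Lf * / m) by (apply Rmult_le_pos; lra).
      assert (q2 : 0 <= 2 * Lg * (/ m + Lf * / m)) by (apply Rmult_le_pos; lra).
      assert (hK1 : / m <= K) by (unfold K; lra).
      assert (hK2 : Lf * / m <= K) by (unfold K; lra).
      assert (hK3 : 2 * Lg * (/ m + Lf * / m) <= K) by (unfold K; lra).
      assert (Fp : forall x y, Rabs (f i (psi_ i x) - f i (psi_ i y)) <= Lf * / m * Rabs (x - y)).
      { intros x y. eapply Rle_trans. apply LLf; auto. rewrite Rmult_assoc. apply Rmult_le_compat_l; auto. }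
      exists K. split. unfold K; lra. split; [|split].
      - intros x y. eapply Rle_trans. apply R3. apply Rmult_le_compat_r; auto. apply Rabs_pos.
      - intros x y. eapply Rle_trans. apply Fp. apply Rmult_le_compat_r; auto. apply Rabs_pos.
      - intros x y. unfold G_. eapply Rle_trans. apply LF2; auto. simpl.
        pose proof (R3 x y). pose proof (Fp x y). pose proof (Rabs_pos (x - y)).
        assert (2 * Lg * (Rabs (psi_ i x - psi_ i y) + Rabs (f i (psi_ i x) - f i (psi_ i y))) <=
                2 * Lg * ((/ m + Lf * / m) * Rabs (x - y))) by (apply Rmult_le_compat_l; lra).
        eapply Rle_trans. exact H3. rewrite <- Rmult_assoc. apply Rmult_le_compat_r; auto. }
    split; [|split].
    - apply DCI_DCR. lra.
      destruct (HPi i hi) as (_ & K1 & K2 & L & kap & hL & C1 & C2 & L1 & L2 & E & Sl & Sw).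
      assert (Dpsi : DCI 0 b (psi_ i)).
      { apply (inverse_DC a b (fun t => F1 (t, f i t)) (psi_ i) K1 K2 L m (c / 6) kap); auto; try (unfold m; lra).
        all: try (intros s t hs hst ht; unfold m; apply Sl; auto).
        all: try (intros x hx; split; auto). }
      assert (Dfp : DCI 0 b (fun x => f i (psi_ i x))) by (apply DCI_comp1 with a; auto; lra).
      apply DCI_ext with (fun x => g2 (psi_ i x, f i (psi_ i x)) - h2 (psi_ i x, f i (psi_ i x))).
      { intros x hx. unfold G_. rewrite EF2; auto. }
      apply DCI_sub.
      + apply (DCI_comp D g2 Lg 0 b (psi_ i) (fun x => f i (psi_ i x))); auto.
      + apply (DCI_comp D h2 Lg 0 b (psi_ i) (fun x => f i (psi_ i x))); auto.
    - unfold G_. rewrite psi0, f0. exact F20.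
    - apply limR_intro. intros eps he.
      assert (hG0 : G_ i 0 = 0) by (unfold G_; rewrite psi0, f0; exact F20).
      destruct (HF2 (eps * m / 2) ltac:(nra)) as (n1 & hn1 & N1).
      assert (he2 : 0 < eps * m / (2 * (2 * Lg + 1))) by (apply Rmult_lt_0_compat; [nra| apply Rinv_0_lt_compat; lra]).
      destruct (limf _ he2) as (n2 & hn2 & N2).
      set (mn := Rmin (Rmin n1 n2) a).
      assert (hmn : 0 < mn /\ mn <= n1 /\ mn <= n2 /\ mn <= a) by (unfold mn, Rmin; repeat destruct Rle_dec; lra).
      exists (m * mn). split. nra. intros x hx.
      assert (hxb : x <= b) by (unfold b; nra).
      set (t := psi_ i x).
      assert (ht : 0 <= t <= a) by apply R1.
      assert (hpt : F1 (t, f i t) = x) by (apply R2; lra).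
      assert (htp : 0 < t).
      { destruct (Req_dec t 0) as [e|ne]. rewrite e, phi0 in hpt. lra. lra. }
      pose proof (Mono i hi 0 t ltac:(lra) htp ltac:(lra)). rewrite phi0, hpt in H0.
      assert (htn : t < mn) by nra.
      pose proof (N1 t ltac:(lra)). pose proof (N2 t ltac:(lra)).
      rewrite Rabs_div in H1, H2 by lra. rewrite (Rabs_pos_eq t) in H1, H2 by lra.
      assert (A1 : Rabs (F2 (t, 0)) < eps * m / 2 * t).
      { apply Rmult_lt_reg_r with (/ t). apply Rinv_0_lt_compat; lra.
        replace (eps * m / 2 * t * / t) with (eps * m / 2) by (field; lra). exact H1. }
      assert (A2 : Rabs (f i t) <= eps * m / (2 * (2 * Lg + 1)) * t).
      { left. apply Rmult_lt_reg_r with (/ t). apply Rinv_0_lt_compat; lra.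
        replace (eps * m / (2 * (2 * Lg + 1)) * t * / t) with (eps * m / (2 * (2 * Lg + 1))) by (field; lra). exact H2. }
      assert (A3 : Rabs (F2 (t, f i t) - F2 (t, 0)) <= 2 * Lg * Rabs (f i t - 0)).
      { destruct (HDf i hi t ltac:(lra)) as [d1 d2]. apply (F_diff D g2 h2 F2 Lg); auto. }
      rewrite Rminus_0_r in A3.
      assert (A4 : 2 * Lg * Rabs (f i t) <= 2 * Lg * (eps * m / (2 * (2 * Lg + 1)) * t)) by (apply Rmult_le_compat_l; lra).
      assert (A5 : 2 * Lg * (eps * m / (2 * (2 * Lg + 1)) * t) <= eps * m / 2 * t).
      { replace (2 * Lg * (eps * m / (2 * (2 * Lg + 1)) * t)) with ((2 * Lg / (2 * Lg + 1)) * (eps * m / 2 * t)) by (field; lra).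
        assert (2 * Lg / (2 * Lg + 1) <= 1).
        { apply Rmult_le_reg_r with (2 * Lg + 1). lra. replace (2 * Lg / (2 * Lg + 1) * (2 * Lg + 1)) with (2 * Lg) by (field; lra). lra. }
        assert (0 <= eps * m / 2) by (unfold Rdiv; apply Rmult_le_pos; nra).
        assert (0 <= eps * m / 2 * t) by (apply Rmult_le_pos; lra).
        rewrite <- (Rmult_1_l (eps * m / 2 * t)) at 2. apply Rmult_le_compat_r; lra. }
      assert (A6 : Rabs (G_ i x) < eps * x).
      { unfold G_. fold t. pose proof (Rabs_triang_inv (F2 (t, f i t)) (F2 (t, 0))). nra. }
      rewrite hG0, !Rminus_0_r. rewrite Rabs_div by lra. rewrite (Rabs_pos_eq x) by lra.
      apply Rmult_lt_reg_r with x. lra. replace (Rabs (G_ i x) / x * x) with (Rabs (G_ i x)) by (field; lra). lra. }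
  assert (hH0 : forall h, H h -> h 0 = 0).
  { intros h Hh. assert (S (0, h 0)) by (apply HSH; exists h; split; auto; split; simpl; lra).
    destruct (Hcov _ H0) as (i & hi & [_ e]). simpl in e. rewrite e. apply (Hfi i hi). }
  assert (Hcovh : forall h, H h -> forall t, 0 <= t <= a -> exists i, (i < k)%nat /\ h t = f i t).
  { intros h Hh t ht. assert (S (t, h t)) by (apply HSH; exists h; split; auto; split; simpl; lra).
    destruct (Hcov _ H0) as (i & hi & [_ e]). simpl in e. exists i; split; auto. }
  assert (HDh : forall h, H h -> forall t, 0 <= t <= a -> D (t, h t)).
  { intros h Hh t ht. destruct (Hcovh h Hh t ht) as (i & hi & e). rewrite e. apply HDa; auto. }
  assert (Chh : forall h, H h -> contI 0 a h).
  { intros h Hh. apply contI_restr with 0 r; try lra. apply contOn_ed. auto. }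
  set (psih := fun h x => invf (fun t => F1 (t, h t)) a (clamp 0 b x)).
  set (etah := fun h x => F2 (psih h x, h (psih h x))).
  assert (PH : forall h, H h ->
    ((forall x, 0 <= psih h x <= a) /\ (forall x, 0 <= x <= b -> F1 (psih h x, h (psih h x)) = x) /\
     (forall t, 0 <= t <= a -> 0 <= F1 (t, h t)) /\
     (forall t, 0 <= t <= a -> F1 (t, h t) <= b -> psih h (F1 (t, h t)) = t)) /\
    continuous_on_I b (etah h)).
  { intros h Hh.
    assert (Cph : contI 0 a (fun t => F1 (t, h t))).
    { apply (comp_cont D F1 (2 * Lg) a a 1 (fun t => t) h); auto; try lra. }
    assert (Mh : forall s t, 0 <= s -> s < t -> t <= a -> m * (t - s) <= F1 (t, h t) - F1 (s, h s)).
    { apply (mono_glue a m k f h (fun t y => F1 (t, y))); auto; lra. }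
    assert (phi0 : F1 (0, h 0) = 0) by (rewrite hH0; auto).
    destruct (inverse_basic (fun t => F1 (t, h t)) a m b (psih h) ltac:(lra) hm eq_refl phi0 Cph
       Mh (fun x => eq_refl)) as (R1 & R2 & R3 & R4 & R5).
    split. { split; auto. }
    apply contOn_intro. unfold etah.
    apply (comp_cont D F2 (2 * Lg) a b (/ m) (psih h) h); auto; try lra.
    left; apply Rinv_0_lt_compat; lra. }
  set (Sst := fun q : pt2 => (exists p, S p /\ fst p <= a /\ F p = q) /\ fst q <= b).
  assert (St1 : forall q, Sst q <-> exists i, (i < k)%nat /\
            exists t, 0 <= t <= a /\ S (t, f i t) /\ F (t, f i t) = q /\ fst q <= b).
  { intros q. split.
    - intros ((p & Sp & hp & <-) & hq). destruct (Hcov p Sp) as (i & hi & [hp1 hp2]).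
      exists i; split; auto. exists (fst p). split. lra.
      rewrite <- hp2, <- surjective_pairing. auto.
    - intros (i & hi & t & ht & St & <- & hq). split; auto. exists (t, f i t). simpl. split; [auto|split; [lra|auto]]. }
  assert (St2 : forall q, Sst q <-> exists h, H h /\
            exists t, 0 <= t <= a /\ True /\ F (t, h t) = q /\ fst q <= b).
  { intros q. split.
    - intros ((p & Sp & hp & <-) & hq). destruct (proj1 (HSH p) Sp) as (h & Hh & [hp1 hp2]).
      exists h; split; auto. exists (fst p). split. lra.
      rewrite <- hp2, <- surjective_pairing. auto.
    - intros (h & Hh & t & ht & _ & <- & hq). split; auto. exists (t, h t). simpl. split; [|split; [lra|auto]].
      apply HSH. exists h. split; auto. split; simpl; lra. }
  assert (Rel_i : forall i, (i < k)%nat -> forall q,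
     (exists t, 0 <= t <= a /\ S (t, f i t) /\ F (t, f i t) = q /\ fst q <= b) <->
     ((0 <= fst q /\ fst q <= b) /\ snd q = G_ i (fst q) /\ S (psi_ i (fst q), f i (psi_ i (fst q))))).
  { intros i hi q. destruct (PI i hi) as ((R1 & R2 & R3 & R4) & _).
    apply (rel_lemma F (f i) (psi_ i) a b (fun t => S (t, f i t))); auto. }
  assert (Rel_h : forall h, H h -> forall q,
     (exists t, 0 <= t <= a /\ True /\ F (t, h t) = q /\ fst q <= b) <->
     ((0 <= fst q /\ fst q <= b) /\ snd q = etah h (fst q) /\ True)).
  { intros h Hh q. destruct (PH h Hh) as ((R1 & R2 & R3 & R4) & _).
    apply (rel_lemma F h (psih h) a b (fun _ => True)); auto. }
  exists a, b. split; [lra|]. split; [lra|].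
  fold Sst. split; [|split].
  - exists (0, 0). assert (S (0, 0)).
    { destruct (proj1 (HSH p0) Sp0) as (h & Hh & _).
      replace (0, 0) with (0, h 0) by (rewrite hH0; auto).
      apply HSH. exists h. split; auto. split; simpl; lra. }
    split. exists (0, 0). simpl. split; auto. split; auto; lra. simpl; lra.
  - apply closed_ext with (fun q => exists i, (i < k)%nat /\
      ((0 <= fst q /\ fst q <= b) /\ snd q - G_ i (fst q) = 0 /\ S (psi_ i (fst q), f i (psi_ i (fst q))))).
    { intros q. rewrite St1. split.
      - intros (i & hi & hh1 & hh2 & hh3). exists i. split; auto. apply Rel_i; auto. split; auto. split; auto. lra.
      - intros (i & hi & hq). exists i. split; auto. apply Rel_i in hq; auto. destruct hq as (hh1 & hh2 & hh3).
        split; auto. split; auto. lra. }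
    apply closed_finunion. intros i hi. destruct (PI i hi) as (_ & (K & hK & K1 & K2 & K3) & _).
    apply closed_piece with K; auto.
  - exists b. split; auto. split.
    + exists k, G_. split.
      * intros i hi. destruct (PI i hi) as (_ & _ & D1 & D2 & D3). auto.
      * intros q hq. apply St1 in hq. destruct hq as (i & hi & hq). apply Rel_i in hq; auto.
        destruct hq as (hh1 & hh2 & _). exists i. split; auto. split; auto.
    + exists (fun eta => exists h, H h /\ eta = etah h). split.
      * intros eta (h & Hh & ->). apply PH; auto.
      * intros q. rewrite St2. split.
        -- intros (h & Hh & hq). apply Rel_h in hq; auto. destruct hq as (hh1 & hh2 & _).
           exists (etah h). split. exists h; split; auto. split; auto.
        -- intros (eta & (h & Hh & ->) & [hh1 hh2]). exists h. split; auto. apply Rel_h; auto.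
Qed.
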